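(* Let $c_1,c_2,c_3,c_4\in\mathbb{R}$ satisfy $c_{13}\neq 1$, $c_{14}\neq 0$, $2(1+c_2)+c_{123}\neq 0$, and $$\lambda_T^2:=\frac{1}{1-c_{13}}>0,\qquad \lambda_V^2:=\frac{(2-c_1)c_1+c_3^2}{2c_{14}(1-c_{13})}>0,\qquad \lambda_S^2:=\frac{c_{123}(2-c_{14})}{c_{14}(1-c_{13})(2+2c_2+c_{123})}>0,$$ with $\lambda_V^2\neq 1$ and $\lambda_S^2\neq 1$. For a unit vector $\mathbf{k}=(k_a)\in S^2$, define the linear maps $Q(\mathbf{k}):\mathcal{W}\to\mathcal{V}$ and $R(\mathbf{k}):\mathcal{V}\to\mathcal{W}$ (with $\mathcal{V}$, $\mathcal{W}$ and $L$ as in the context) by $$Q(\mathbf{k})(N,a)=L^{-1}\Big(\varepsilon_a{}^{cd}k_cN_{db}+k_aa_b-\tfrac12 c_{14}\delta_{ab}k^ca_c\Big),$$ $$R(\mathbf{k})K=\Big(-\varepsilon_a{}^{cd}k_cK_{db}+c_{13}\varepsilon_{abc}k_dK^{(cd)}+c_2\varepsilon_{abc}k^cK,\ \ \tfrac{c_1}{c_{14}}k^aK_{ab}+\tfrac{c_3}{c_{14}}k^aK_{ba}+\tfrac{c_2}{c_{14}}k_bK\Big),$$ and set $P(\mathbf{k})=\begin{pmatrix}0&Q(\mathbf{k})\\R(\mathbf{k})&0\end{pmatrix}$ acting on $\mathcal{V}\oplus\mathcal{W}\cong\mathbb{R}^{21}$ and $M(\mathbf{k})=Q(\mathbf{k})R(\mathbf{k})$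 acting on $\mathcal{V}$. Then for every $\mathbf{k}\in S^2$ the map $M(\mathbf{k})$ is diagonalizable with all eigenvalues in $\{1,\lambda_T^2,\lambda_V^2,\lambda_S^2\}$ (in particular strictly positive), and there exists a family of symmetric positive-definite $21\times 21$ matrices $H(\mathbf{k})$ depending smoothly on $\mathbf{k}\in S^2$ with $H(\mathbf{k})P(\mathbf{k})=P(\mathbf{k})^TH(\mathbf{k})$ for all $\mathbf{k}\in S^2$. Consequently $P(\mathbf{k})$ is diagonalizable with real eigenvalues contained in $\{0,\pm1,\pm\lambda_T,\pm\lambda_V,\pm\lambda_S\}$.
   Context: Notation: $c_{ij}:=c_i+c_j$, $c_{ijk}:=c_i+c_j+c_k$. Indices $a,b,c,d,f\in\{1,2,3\}$ are raised and lowered with the Kronecker delta $\delta_{ab}$, repeated indices are summed, $\varepsilon_{abc}$ is the totally antisymmetric symbol with $\varepsilon_{123}=1$. $\mathcal{V}$ is the 9-dimensional space of real $3\times3$ matrices $K=(K_{ab})$ (not necessarily symmetric), with $K:=\delta^{ab}K_{ab}$ its trace and $K_{(ab)}:=(K_{ab}+K_{ba})/2$. $\mathcal{W}$ is the 12-dimensional space of pairs $(N,a)$ with $N=(N_{ab})$ a real $3\times 3$ matrix and $a=(a_b)\in\mathbb{R}^3$. $L:\mathcal{V}\to\mathcal{V}$ is the linear map $(LK)_{ab}:=K_{ab}-c_{13}K_{(ab)}+\tfrac12c_{123}\delta_{ab}K$, which is invertible when $c_{13}\neq1$ and $2(1+c_2)+c_{123}\neq0$. *)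

(* Defs.v *)
From Stdlib Require Import Reals Lra Lia ClassicalEpsilon.
Open Scope R_scope.

(* ---------- finite sums, vectors, matrices (indices are nat, only 0..n-1 used) ---------- *)
Fixpoint sumn (n : nat) (f : nat -> R) : R :=
  match n with O => 0 | S m => sumn m f + f m end.

Definition vec := nat -> R.
Definition mat := nat -> nat -> R.

Definition mmul (n : nat) (A B : mat) : mat :=
  fun i j => sumn n (fun l => A i l * B l j).
Definition transp (A : mat) : mat := fun i j => A j i.

Definition delta (a b : nat) : R := if Nat.eqb a b then 1 else 0.

(* Levi-Civita symbol on {0,1,2} (indices 1,2,3 of the paper shifted to 0,1,2) *)
Definition eps (a b c : nat) : R :=
  match a, b, c with
  | 0%nat, 1%nat, 2%nat => 1 | 1%nat, 2%nat, 0%nat => 1 | 2%nat, 0%nat, 1%nat => 1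
  | 0%nat, 2%nat, 1%nat => -1 | 2%nat, 1%nat, 0%nat => -1 | 1%nat, 0%nat, 2%nat => -1
  | _, _, _ => 0
  end.

Definition sum3 (f : nat -> R) : R := f 0%nat + f 1%nat + f 2%nat.

Definition M3 := nat -> nat -> R.
Definition tr3 (K : M3) : R := sum3 (fun a => K a a).
Definition symp (K : M3) : M3 := fun a b => (K a b + K b a) / 2.

Definition Lmap (c1 c2 c3 : R) (K : M3) : M3 :=
  fun a b => K a b - (c1 + c3) * symp K a b + / 2 * (c1 + c2 + c3) * delta a b * tr3 K.

(* L^{-1}: the (unique, when L is invertible) K with L K = X on indices a,b < 3 *)
Definition Linv (c1 c2 c3 : R) (X : M3) : M3 :=
  epsilon (inhabits (fun _ _ => 0))
    (fun K => forall a b, (a < 3)%nat -> (b < 3)%nat -> Lmap c1 c2 c3 K a b = X a b).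

Definition Qmap (c1 c2 c3 c4 : R) (k : nat -> R) (N : M3) (av : nat -> R) : M3 :=
  Linv c1 c2 c3 (fun a b =>
      sum3 (fun c => sum3 (fun d => eps a c d * k c * N d b))
    + k a * av b
    - / 2 * (c1 + c4) * delta a b * sum3 (fun c => k c * av c)).

Definition RmapN (c1 c2 c3 c4 : R) (k : nat -> R) (K : M3) : M3 :=
  fun a b =>
    - sum3 (fun c => sum3 (fun d => eps a c d * k c * K d b))
    + (c1 + c3) * sum3 (fun c => sum3 (fun d => eps a b c * k d * symp K c d))
    + c2 * sum3 (fun c => eps a b c * k c) * tr3 K.

Definition Rmapa (c1 c2 c3 c4 : R) (k : nat -> R) (K : M3) : nat -> R :=
  fun b =>
    c1 / (c1 + c4) * sum3 (fun a => k a * K a b)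
  + c3 / (c1 + c4) * sum3 (fun a => k a * K b a)
  + c2 / (c1 + c4) * k b * tr3 K.

(* ---------- coordinates: V = R^9 via K_ab <-> index 3a+b;
   V (+) W = R^21 via K_ab <-> 3a+b, N_ab <-> 9+3a+b, a_b <-> 18+b ---------- *)
Definition Kof (v : vec) : M3 := fun a b => v (3 * a + b)%nat.
Definition Nof (v : vec) : M3 := fun a b => v (9 + 3 * a + b)%nat.
Definition aof (v : vec) : nat -> R := fun b => v (18 + b)%nat.

Definition unitv (j : nat) : vec := fun l => if Nat.eqb l j then 1 else 0.

Definition Pmap (c1 c2 c3 c4 : R) (k : nat -> R) (v : vec) : vec :=
  fun i =>
    if Nat.ltb i 9 then Qmap c1 c2 c3 c4 k (Nof v) (aof v) (i / 3)%nat (i mod 3)%nat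
    else if Nat.ltb i 18 then RmapN c1 c2 c3 c4 k (Kof v) ((i - 9) / 3)%nat ((i - 9) mod 3)%nat
    else Rmapa c1 c2 c3 c4 k (Kof v) (i - 18)%nat.

Definition Pmat (c1 c2 c3 c4 : R) (k : nat -> R) : mat :=
  fun i j => Pmap c1 c2 c3 c4 k (unitv j) i.

Definition Mmap (c1 c2 c3 c4 : R) (k : nat -> R) (K : M3) : M3 :=
  Qmap c1 c2 c3 c4 k (RmapN c1 c2 c3 c4 k K) (Rmapa c1 c2 c3 c4 k K).

Definition Mmat (c1 c2 c3 c4 : R) (k : nat -> R) : mat :=
  fun i j => Mmap c1 c2 c3 c4 k (Kof (unitv j)) (i / 3)%nat (i mod 3)%nat.

Definition kvec (x y z : R) : nat -> R :=
  fun i => match i with 0%nat => x | 1%nat => y | _ => z end.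

Definition lamT2 (c1 c3 : R) : R := / (1 - (c1 + c3)).
Definition lamV2 (c1 c3 c4 : R) : R :=
  ((2 - c1) * c1 + c3 ^ 2) / (2 * (c1 + c4) * (1 - (c1 + c3))).
Definition lamS2 (c1 c2 c3 c4 : R) : R :=
  (c1 + c2 + c3) * (2 - (c1 + c4))
  / ((c1 + c4) * (1 - (c1 + c3)) * (2 + 2 * c2 + (c1 + c2 + c3))).

Definition diagonalizable_with (n : nat) (A : mat) (S : R -> Prop) : Prop :=
  exists (T Ti : mat) (mu : nat -> R),
    (forall i j, (i < n)%nat -> (j < n)%nat -> mmul n T Ti i j = delta i j) /\
    (forall i j, (i < n)%nat -> (j < n)%nat -> mmul n Ti T i j = delta i j) /\
    (forall j, (j < n)%nat -> S (mu j)) /\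
    (forall i j, (i < n)%nat -> (j < n)%nat -> mmul n A T i j = T i j * mu j).

Definition sym_posdef (n : nat) (H : mat) : Prop :=
  (forall i j, (i < n)%nat -> (j < n)%nat -> H i j = H j i) /\
  (forall v : vec, (exists i, (i < n)%nat /\ v i <> 0) ->
     0 < sumn n (fun i => v i * sumn n (fun j => H i j * v j))).

Definition continuous3 (f : R -> R -> R -> R) : Prop :=
  forall x y z e, 0 < e -> exists d, 0 < d /\
    forall x' y' z', Rabs (x' - x) < d -> Rabs (y' - y) < d -> Rabs (z' - z) < d ->
      Rabs (f x' y' z' - f x y z) < e.

Definition partial3 (i : nat) (f g : R -> R -> R -> R) : Prop :=
  forall x y z,
    match i with
    | 0%nat => derivable_pt_lim (fun t => f t y z) x (g x y z)
    | 1%nat => derivable_pt_lim (fun t => f x t z) y (g x y z)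
    | _ => derivable_pt_lim (fun t => f x y t) z (g x y z)
    end.

Fixpoint Ck3 (n : nat) (f : R -> R -> R -> R) : Prop :=
  match n with
  | O => continuous3 f
  | S m => continuous3 f /\
           forall i, (i < 3)%nat -> exists g, partial3 i f g /\ Ck3 m g
  end.

Definition smooth3 (f : R -> R -> R -> R) : Prop := forall n, Ck3 n f.

(* Main.v *)
Require Import Defs.
From Stdlib Require Import Reals Lra Lia ClassicalEpsilon List FunctionalExtensionality.
Open Scope R_scope.

Definition LinvE (c1 c2 c3 : R) (X : M3) : M3 :=
  fun a b => (X a b - X b a) / 2
    + ((X a b + X b a) / 2
       - (c1 + c2 + c3) / (2 * (1 - (c1 + c3) + 3 / 2 * (c1 + c2 + c3))) * delta a b * tr3 X)
      / (1 - (c1 + c3)).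

Ltac lt3 a := destruct a as [|[|[|a]]]; [| | | exfalso; lia].

Ltac nzl := repeat split; intro HH;
  match goal with H : ?a <> ?b |- _ => apply H; lra end.

Lemma D3_ne (c1 c2 c3 : R) : 2 * (1 + c2) + (c1 + c2 + c3) <> 0 ->
  (1 - (c1 + c3) + 3 / 2 * (c1 + c2 + c3)) <> 0.
Proof. intros H E; apply H; lra. Qed.

Lemma Lmap_LinvE c1 c2 c3 X a b : c1 + c3 <> 1 -> 2 * (1 + c2) + (c1 + c2 + c3) <> 0 ->
  (a < 3)%nat -> (b < 3)%nat -> Lmap c1 c2 c3 (LinvE c1 c2 c3 X) a b = X a b.
Proof.
  intros h1 h2 ha hb. pose proof (D3_ne _ _ _ h2) as h3.
  assert (h4 : 1 - (c1 + c3) <> 0) by lra.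
  unfold Lmap, LinvE, symp, tr3, sum3, delta.
  lt3 a; lt3 b; simpl; field; nzl.
Qed.

Lemma LinvE_Lmap c1 c2 c3 K a b : c1 + c3 <> 1 -> 2 * (1 + c2) + (c1 + c2 + c3) <> 0 ->
  (a < 3)%nat -> (b < 3)%nat -> LinvE c1 c2 c3 (Lmap c1 c2 c3 K) a b = K a b.
Proof.
  intros h1 h2 ha hb. pose proof (D3_ne _ _ _ h2) as h3.
  assert (h4 : 1 - (c1 + c3) <> 0) by lra.
  unfold Lmap, LinvE, symp, tr3, sum3, delta.
  lt3 a; lt3 b; simpl; field; nzl.
Qed.

Definition eq3 (X Y : M3) := forall a b, (a < 3)%nat -> (b < 3)%nat -> X a b = Y a b.

Lemma LinvE_ext c1 c2 c3 X Y a b : eq3 X Y -> (a < 3)%nat -> (b < 3)%nat ->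
  LinvE c1 c2 c3 X a b = LinvE c1 c2 c3 Y a b.
Proof.
  intros H ha hb. unfold LinvE, tr3, sum3.
  rewrite (H a b), (H b a), (H 0%nat 0%nat), (H 1%nat 1%nat), (H 2%nat 2%nat); auto; lia.
Qed.

Lemma Linv_eq c1 c2 c3 X a b : c1 + c3 <> 1 -> 2 * (1 + c2) + (c1 + c2 + c3) <> 0 ->
  (a < 3)%nat -> (b < 3)%nat -> Linv c1 c2 c3 X a b = LinvE c1 c2 c3 X a b.
Proof.
  intros h1 h2 ha hb. unfold Linv.
  set (P := fun K : M3 => forall a b, (a < 3)%nat -> (b < 3)%nat -> Lmap c1 c2 c3 K a b = X a b).
  assert (HK : P (epsilon (inhabits (fun _ _ : nat => 0)) P)).
  { apply epsilon_spec. exists (LinvE c1 c2 c3 X). intros a' b' ha' hb'; apply Lmap_LinvE; auto. }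
  change (epsilon (inhabits (fun _ _ : nat => 0)) P a b = LinvE c1 c2 c3 X a b).
  set (K := epsilon (inhabits (fun _ _ : nat => 0)) P) in *.
  rewrite <- (LinvE_Lmap c1 c2 c3 K a b h1 h2 ha hb).
  apply LinvE_ext; auto.
Qed.
Definition rot (F : mat) (K : M3) : M3 :=
  fun a b => sum3 (fun i => sum3 (fun j => F a i * K i j * F b j)).
Definition rotv (F : mat) (w : nat -> R) : nat -> R :=
  fun a => sum3 (fun i => F a i * w i).
Definition e3 : nat -> R := kvec 0 0 1.

Definition frame (F : mat) (k : nat -> R) : Prop :=
  (forall a b, (a < 3)%nat -> (b < 3)%nat -> sum3 (fun j => F a j * F b j) = delta a b) /\
  (forall i j, (i < 3)%nat -> (j < 3)%nat -> sum3 (fun a => F a i * F a j) = delta i j) /\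
  (forall a, (a < 3)%nat -> k a = F a 2%nat) /\
  (forall a b m, (a < 3)%nat -> (b < 3)%nat -> (m < 3)%nat ->
     sum3 (fun c => eps a b c * F c m) = sum3 (fun i => sum3 (fun j => F a i * F b j * eps i j m))) /\
  (forall a m i, (a < 3)%nat -> (m < 3)%nat -> (i < 3)%nat ->
     sum3 (fun c => sum3 (fun d => eps a c d * F c m * F d i)) = sum3 (fun l => eps l m i * F a l)).

Lemma sum3_ext f g : (forall i, (i < 3)%nat -> f i = g i) -> sum3 f = sum3 g.
Proof. intros H; unfold sum3; rewrite !H; auto; lia. Qed.

Ltac s3r := unfold tr3, rot, rotv, symp, e3, kvec; unfold sum3; simpl; first [ring | field].

Lemma kF F k : frame F k -> forall c, (c < 3)%nat -> k c = F c 2%nat.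
Proof. intros [_ [_ [H _]]]; exact H. Qed.

Lemma sum3_k F k f : frame F k -> sum3 (fun c => f (k c) c) = sum3 (fun c => f (F c 2%nat) c).
Proof. intros Hf; apply sum3_ext; intros c Hc; rewrite (kF F k Hf c Hc); auto. Qed.

Lemma B1 F k K a b : frame F k -> (a < 3)%nat -> (b < 3)%nat ->
  sum3 (fun c => sum3 (fun d => eps a c d * k c * rot F K d b))
  = rot F (fun i j => sum3 (fun c => sum3 (fun d => eps i c d * e3 c * K d j))) a b.
Proof.
  intros Hf ha hb. destruct Hf as (h1 & h2 & h3 & h4 & h5).
  transitivity (sum3 (fun i => sum3 (fun j =>
     sum3 (fun c => sum3 (fun d => eps a c d * F c 2%nat * F d i)) * K i j * F b j))).
  { unfold sum3 at 1. rewrite (h3 0%nat), (h3 1%nat), (h3 2%nat) by lia. s3r. }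
  transitivity (sum3 (fun i => sum3 (fun j => sum3 (fun l => eps l 2 i * F a l) * K i j * F b j))).
  { apply sum3_ext; intros i hi; apply sum3_ext; intros j hj. rewrite h5; auto. }
  s3r.
Qed.

Lemma B2 F k K a b : frame F k -> (a < 3)%nat -> (b < 3)%nat ->
  sum3 (fun c => sum3 (fun d => eps a b c * k d * symp (rot F K) c d))
  = rot F (fun i j => sum3 (fun c => sum3 (fun d => eps i j c * e3 d * symp K c d))) a b.
Proof.
  intros Hf ha hb. destruct Hf as (h1 & h2 & h3 & h4 & h5).
  transitivity (sum3 (fun c => eps a b c * sum3 (fun i => sum3 (fun j =>
      F c i * ((K i j + K j i) / 2) * sum3 (fun d => F d 2%nat * F d j))))).
  { transitivity (sum3 (fun c => sum3 (fun d => eps a b c * F d 2%nat * symp (rot F K) c d))).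
    { apply sum3_ext; intros c hc; apply sum3_ext; intros d hd; rewrite h3; auto. }
    s3r. }
  transitivity (sum3 (fun c => eps a b c * sum3 (fun i => sum3 (fun j =>
      F c i * ((K i j + K j i) / 2) * delta 2 j)))).
  { apply sum3_ext; intros c hc; f_equal. apply sum3_ext; intros i hi; apply sum3_ext; intros j hj.
    rewrite h2; auto. }
  transitivity (sum3 (fun m => sum3 (fun c => eps a b c * F c m) * ((K m 2%nat + K 2%nat m)/2))).
  { unfold delta; s3r. }
  transitivity (sum3 (fun m => sum3 (fun i => sum3 (fun j => F a i * F b j * eps i j m)) * ((K m 2%nat + K 2%nat m)/2))).
  { apply sum3_ext; intros m hm. rewrite h4; auto. }
  s3r.
Qed.

Lemma B3 F k a b : frame F k -> (a < 3)%nat -> (b < 3)%nat ->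
  sum3 (fun c => eps a b c * k c) = rot F (fun i j => sum3 (fun c => eps i j c * e3 c)) a b.
Proof.
  intros Hf ha hb. destruct Hf as (h1 & h2 & h3 & h4 & h5).
  transitivity (sum3 (fun c => eps a b c * F c 2%nat)).
  { unfold sum3; rewrite (h3 0%nat), (h3 1%nat), (h3 2%nat) by lia; ring. }
  rewrite h4; auto. s3r.
Qed.

Lemma B4 F k K : frame F k -> tr3 (rot F K) = tr3 K.
Proof.
  intros Hf. destruct Hf as (h1 & h2 & h3 & h4 & h5).
  transitivity (sum3 (fun i => sum3 (fun j => K i j * sum3 (fun a => F a i * F a j)))).
  { s3r. }
  transitivity (sum3 (fun i => sum3 (fun j => K i j * delta i j))).
  { apply sum3_ext; intros i hi; apply sum3_ext; intros j hj. rewrite h2; auto. }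
  unfold delta; s3r.
Qed.

Lemma B5 F k a b : frame F k -> (a < 3)%nat -> (b < 3)%nat -> delta a b = rot F delta a b.
Proof.
  intros Hf ha hb. destruct Hf as (h1 & h2 & h3 & h4 & h5).
  rewrite <- h1; auto. unfold delta; s3r.
Qed.

Lemma B6 F k K b : frame F k -> (b < 3)%nat ->
  sum3 (fun a => k a * rot F K a b) = rotv F (fun j => sum3 (fun i => e3 i * K i j)) b.
Proof.
  intros Hf hb. destruct Hf as (h1 & h2 & h3 & h4 & h5).
  transitivity (sum3 (fun i => sum3 (fun j => sum3 (fun a => F a 2%nat * F a i) * K i j * F b j))).
  { unfold sum3 at 1; rewrite (h3 0%nat), (h3 1%nat), (h3 2%nat) by lia. s3r. }
  transitivity (sum3 (fun i => sum3 (fun j => delta 2 i * K i j * F b j))).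
  { apply sum3_ext; intros i hi; apply sum3_ext; intros j hj. rewrite h2; auto. }
  unfold delta; s3r.
Qed.

Lemma B7 F k K b : frame F k -> (b < 3)%nat ->
  sum3 (fun a => k a * rot F K b a) = rotv F (fun j => sum3 (fun i => e3 i * K j i)) b.
Proof.
  intros Hf hb. destruct Hf as (h1 & h2 & h3 & h4 & h5).
  transitivity (sum3 (fun i => sum3 (fun j => sum3 (fun a => F a 2%nat * F a j) * K i j * F b i))).
  { unfold sum3 at 1; rewrite (h3 0%nat), (h3 1%nat), (h3 2%nat) by lia. s3r. }
  transitivity (sum3 (fun i => sum3 (fun j => delta 2 j * K i j * F b i))).
  { apply sum3_ext; intros i hi; apply sum3_ext; intros j hj. rewrite h2; auto. }
  unfold delta; s3r.
Qed.

Lemma B8 F k b : frame F k -> (b < 3)%nat -> k b = rotv F e3 b.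
Proof.
  intros Hf hb. destruct Hf as (h1 & h2 & h3 & h4 & h5). rewrite h3; auto. s3r.
Qed.

Lemma B9 F k av a b : frame F k -> (a < 3)%nat -> (b < 3)%nat ->
  k a * rotv F av b = rot F (fun i j => e3 i * av j) a b.
Proof.
  intros Hf ha hb. destruct Hf as (h1 & h2 & h3 & h4 & h5). rewrite h3; auto. s3r.
Qed.

Lemma B10 F k av : frame F k ->
  sum3 (fun c => k c * rotv F av c) = sum3 (fun c => e3 c * av c).
Proof.
  intros Hf. destruct Hf as (h1 & h2 & h3 & h4 & h5).
  transitivity (sum3 (fun j => sum3 (fun c => F c 2%nat * F c j) * av j)).
  { unfold sum3 at 1; rewrite (h3 0%nat), (h3 1%nat), (h3 2%nat) by lia. s3r. }
  transitivity (sum3 (fun j => delta 2 j * av j)).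
  { apply sum3_ext; intros j hj. rewrite h2; auto. }
  unfold delta; s3r.
Qed.

Definition QX (c1 c4 : R) (k : nat -> R) (N : M3) (av : nat -> R) : M3 :=
  fun a b => sum3 (fun c => sum3 (fun d => eps a c d * k c * N d b))
    + k a * av b - / 2 * (c1 + c4) * delta a b * sum3 (fun c => k c * av c).

Definition QmapE c1 c2 c3 c4 k N av : M3 := LinvE c1 c2 c3 (QX c1 c4 k N av).
Definition MmapE c1 c2 c3 c4 k K : M3 :=
  QmapE c1 c2 c3 c4 k (RmapN c1 c2 c3 c4 k K) (Rmapa c1 c2 c3 c4 k K).

Definition hyps (c1 c2 c3 c4 : R) : Prop :=
  c1 + c3 <> 1 /\ c1 + c4 <> 0 /\ 2 * (1 + c2) + (c1 + c2 + c3) <> 0.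

Lemma Qmap_eq c1 c2 c3 c4 k N av a b : hyps c1 c2 c3 c4 -> (a < 3)%nat -> (b < 3)%nat ->
  Qmap c1 c2 c3 c4 k N av a b = QmapE c1 c2 c3 c4 k N av a b.
Proof. intros (h1 & h2 & h3) ha hb. unfold Qmap, QmapE. rewrite Linv_eq; auto. Qed.

Lemma Mmap_eq c1 c2 c3 c4 k K a b : hyps c1 c2 c3 c4 -> (a < 3)%nat -> (b < 3)%nat ->
  Mmap c1 c2 c3 c4 k K a b = MmapE c1 c2 c3 c4 k K a b.
Proof. intros H ha hb. unfold Mmap, MmapE. apply Qmap_eq; auto. Qed.

Lemma LinvE_rot c1 c2 c3 c4 F k X a b : hyps c1 c2 c3 c4 -> frame F k -> (a < 3)%nat -> (b < 3)%nat ->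
  LinvE c1 c2 c3 (rot F X) a b = rot F (LinvE c1 c2 c3 X) a b.
Proof.
  intros (h1 & h2 & h3) Hf ha hb. pose proof (D3_ne _ _ _ h3) as h4.
  assert (h5 : 1 - (c1 + c3) <> 0) by lra.
  unfold LinvE at 1. rewrite (B4 F k X Hf), (B5 F k a b Hf ha hb).
  unfold LinvE, tr3, rot, delta; unfold sum3; simpl. field; nzl.
Qed.

Lemma RmapN_rot c1 c2 c3 c4 F k K a b : frame F k -> (a < 3)%nat -> (b < 3)%nat ->
  RmapN c1 c2 c3 c4 k (rot F K) a b = rot F (RmapN c1 c2 c3 c4 e3 K) a b.
Proof.
  intros Hf ha hb. unfold RmapN at 1.
  rewrite (B1 F k K a b Hf ha hb), (B2 F k K a b Hf ha hb), (B3 F k a b Hf ha hb), (B4 F k K Hf).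
  unfold RmapN. s3r.
Qed.

Lemma Rmapa_rot c1 c2 c3 c4 F k K b : c1 + c4 <> 0 -> frame F k -> (b < 3)%nat ->
  Rmapa c1 c2 c3 c4 k (rot F K) b = rotv F (Rmapa c1 c2 c3 c4 e3 K) b.
Proof.
  intros h Hf hb. unfold Rmapa at 1.
  rewrite (B6 F k K b Hf hb), (B7 F k K b Hf hb), (B8 F k b Hf hb), (B4 F k K Hf).
  unfold Rmapa, tr3, rot, rotv, e3, kvec; unfold sum3; simpl. field; auto.
Qed.

Lemma QX_rot c1 c4 F k N av a b : frame F k -> (a < 3)%nat -> (b < 3)%nat ->
  QX c1 c4 k (rot F N) (rotv F av) a b = rot F (QX c1 c4 e3 N av) a b.
Proof.
  intros Hf ha hb. unfold QX at 1.
  rewrite (B1 F k N a b Hf ha hb), (B9 F k av a b Hf ha hb), (B10 F k av Hf), (B5 F k a b Hf ha hb).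
  unfold QX, delta. s3r.
Qed.

Lemma QX_ext c1 c4 k N N' av av' : eq3 N N' -> (forall b, (b < 3)%nat -> av b = av' b) ->
  eq3 (QX c1 c4 k N av) (QX c1 c4 k N' av').
Proof.
  intros HN Ha a b ha hb. unfold QX, sum3.
  rewrite (HN 0%nat b), (HN 1%nat b), (HN 2%nat b), (Ha b), (Ha 0%nat), (Ha 1%nat), (Ha 2%nat); auto; lia.
Qed.

Lemma MmapE_rot c1 c2 c3 c4 F k K a b : hyps c1 c2 c3 c4 -> frame F k -> (a < 3)%nat -> (b < 3)%nat ->
  MmapE c1 c2 c3 c4 k (rot F K) a b = rot F (MmapE c1 c2 c3 c4 e3 K) a b.
Proof.
  intros H Hf ha hb. pose proof H as (h1 & h2 & h3). unfold MmapE, QmapE.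
  rewrite (LinvE_ext c1 c2 c3 _ (rot F (QX c1 c4 e3 (RmapN c1 c2 c3 c4 e3 K) (Rmapa c1 c2 c3 c4 e3 K)))); auto.
  - apply (LinvE_rot c1 c2 c3 c4 F k); auto.
  - intros a' b' ha' hb'.
    rewrite (QX_ext c1 c4 k _ (rot F (RmapN c1 c2 c3 c4 e3 K)) _ (rotv F (Rmapa c1 c2 c3 c4 e3 K))); auto.
    + apply QX_rot; auto.
    + intros x y hx hy; apply RmapN_rot; auto.
    + intros x hx; apply Rmapa_rot; auto.
Qed.

Lemma QmapE_rot c1 c2 c3 c4 F k N av a b : hyps c1 c2 c3 c4 -> frame F k -> (a < 3)%nat -> (b < 3)%nat ->
  QmapE c1 c2 c3 c4 k (rot F N) (rotv F av) a b = rot F (QmapE c1 c2 c3 c4 e3 N av) a b.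
Proof.
  intros H Hf ha hb. pose proof H as (h1 & h2 & h3). unfold QmapE.
  rewrite (LinvE_ext c1 c2 c3 _ (rot F (QX c1 c4 e3 N av))); auto.
  - apply (LinvE_rot c1 c2 c3 c4 F k); auto.
  - intros a' b' ha' hb'. apply QX_rot; auto.
Qed.
Lemma sumn_ext n f g : (forall l, (l < n)%nat -> f l = g l) -> sumn n f = sumn n g.
Proof. induction n; simpl; intros H; auto. rewrite IHn, H; auto. Qed.

Lemma sumn_plus n f g : sumn n (fun l => f l + g l) = sumn n f + sumn n g.
Proof. induction n; simpl; [ring|]. rewrite IHn; ring. Qed.

Lemma sumn_minus n f g : sumn n (fun l => f l - g l) = sumn n f - sumn n g.
Proof. induction n; simpl; [ring|]. rewrite IHn; ring. Qed.

Lemma sumn_scal_l n a f : sumn n (fun l => a * f l) = a * sumn n f.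
Proof. induction n; simpl; [ring|]. rewrite IHn; ring. Qed.

Lemma sumn_scal_r n a f : sumn n (fun l => f l * a) = sumn n f * a.
Proof. induction n; simpl; [ring|]. rewrite IHn; ring. Qed.

Lemma sumn_zero n f : (forall l, (l < n)%nat -> f l = 0) -> sumn n f = 0.
Proof. induction n; simpl; intros H; auto. rewrite IHn, H; auto; ring. Qed.

Lemma sumn_swap n m f : sumn n (fun i => sumn m (fun j => f i j)) = sumn m (fun j => sumn n (fun i => f i j)).
Proof.
  induction n; simpl.
  - symmetry; apply sumn_zero; auto.
  - rewrite IHn, <- sumn_plus; auto.
Qed.

Lemma sumn_split a b f : sumn (a + b) f = sumn a f + sumn b (fun l => f (a + l)%nat).
Proof.
  induction b; simpl.
  - rewrite Nat.add_0_r; ring.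
  - rewrite Nat.add_succ_r; simpl; rewrite IHb; ring.
Qed.

Lemma delta_refl i : delta i i = 1.
Proof. unfold delta; rewrite Nat.eqb_refl; auto. Qed.
Lemma delta_neq i j : i <> j -> delta i j = 0.
Proof. intros H; unfold delta; destruct (Nat.eqb_spec i j); auto; contradiction. Qed.
Lemma delta_sym i j : delta i j = delta j i.
Proof. unfold delta; rewrite Nat.eqb_sym; auto. Qed.

Lemma sumn_delta_r n f j : (j < n)%nat -> sumn n (fun l => f l * delta l j) = f j.
Proof.
  induction n; intros H; [lia|]. simpl. destruct (Nat.eq_dec n j).
  - subst. rewrite delta_refl. rewrite sumn_zero; [ring|]. intros l hl; rewrite delta_neq; [ring|lia].
  - rewrite IHn by lia. rewrite delta_neq by auto. ring.
Qed.

Lemma sumn_delta_l n f j : (j < n)%nat -> sumn n (fun l => delta j l * f l) = f j.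
Proof.
  intros H. rewrite <- (sumn_delta_r n f j H). apply sumn_ext; intros; rewrite delta_sym; ring.
Qed.

Lemma unitv_delta L l : unitv L l = delta l L.
Proof. reflexivity. Qed.

Lemma sumn_unitv n v l : (l < n)%nat -> sumn n (fun L => v L * unitv L l) = v l.
Proof.
  intros H. rewrite <- (sumn_delta_r n v l H). apply sumn_ext; intros L _.
  rewrite unitv_delta, delta_sym; auto.
Qed.

Lemma mmul_assoc n A B C i j :
  mmul n (mmul n A B) C i j = mmul n A (mmul n B C) i j.
Proof.
  unfold mmul. transitivity (sumn n (fun l => sumn n (fun m => A i m * B m l * C l j))).
  - apply sumn_ext; intros; rewrite <- sumn_scal_r; auto.
  - rewrite sumn_swap. apply sumn_ext; intros. rewrite <- sumn_scal_l. apply sumn_ext; intros; ring.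
Qed.

Lemma mmul_ext_l n A A' B i j : (forall l, (l < n)%nat -> A i l = A' i l) ->
  mmul n A B i j = mmul n A' B i j.
Proof. intros H; unfold mmul; apply sumn_ext; intros; rewrite H; auto. Qed.
Lemma mmul_ext_r n A B B' i j : (forall l, (l < n)%nat -> B l j = B' l j) ->
  mmul n A B i j = mmul n A B' i j.
Proof. intros H; unfold mmul; apply sumn_ext; intros; rewrite H; auto. Qed.

Lemma mmul_delta_l n B i j : (i < n)%nat -> mmul n (fun a b => delta a b) B i j = B i j.
Proof. intros H; unfold mmul. apply (sumn_delta_l n (fun l => B l j)); auto. Qed.
Lemma mmul_delta_r n A i j : (j < n)%nat -> mmul n A (fun a b => delta a b) i j = A i j.
Proof. intros H; unfold mmul. apply (sumn_delta_r n (fun l => A i l)); auto. Qed.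

Lemma diag_conj n A B S Si (Pset : R -> Prop) :
  (forall i j, (i < n)%nat -> (j < n)%nat -> mmul n A S i j = mmul n S B i j) ->
  (forall i j, (i < n)%nat -> (j < n)%nat -> mmul n S Si i j = delta i j) ->
  (forall i j, (i < n)%nat -> (j < n)%nat -> mmul n Si S i j = delta i j) ->
  diagonalizable_with n B Pset -> diagonalizable_with n A Pset.
Proof.
  intros HAS HS1 HS2 (T & Ti & mu & h1 & h2 & h3 & h4).
  exists (mmul n S T), (mmul n Ti Si), mu. split; [|split; [|split]]; auto.
  - intros i j hi hj. rewrite mmul_assoc.
    rewrite (mmul_ext_r n S _ Si); [apply HS1; auto|].
    intros l hl. rewrite <- mmul_assoc. rewrite (mmul_ext_l n _ (fun a b => delta a b)).
    + apply mmul_delta_l; auto.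
    + intros m hm; apply h1; auto.
  - intros i j hi hj. rewrite mmul_assoc.
    rewrite (mmul_ext_r n Ti _ T); [apply h2; auto|].
    intros l hl. rewrite <- mmul_assoc. rewrite (mmul_ext_l n _ (fun a b => delta a b)).
    + apply mmul_delta_l; auto.
    + intros m hm; apply HS2; auto.
  - intros i j hi hj. rewrite <- mmul_assoc.
    rewrite (mmul_ext_l n _ (mmul n S B)); [|intros; apply HAS; auto].
    rewrite mmul_assoc. rewrite (mmul_ext_r n S _ (fun l j => T l j * mu j)).
    + unfold mmul. rewrite <- sumn_scal_r. apply sumn_ext; intros; ring.
    + intros l hl; apply h4; auto.
Qed.

Lemma lin_sum n (phi : vec -> R) :
  (forall v w, phi (fun l => v l + w l) = phi v + phi w) ->
  (forall a v, phi (fun l => a * v l) = a * phi v) ->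
  (forall v w, (forall l, (l < n)%nat -> v l = w l) -> phi v = phi w) ->
  forall v, phi v = sumn n (fun L => phi (unitv L) * v L).
Proof.
  intros Hadd Hsc Hext v.
  assert (H0 : phi (fun _ => 0) = 0).
  { transitivity (phi (fun l => 0 * v l)). apply Hext; intros; ring. rewrite Hsc; ring. }
  assert (Hm : forall m, phi (fun l => sumn m (fun L => v L * unitv L l)) = sumn m (fun L => phi (unitv L) * v L)).
  { induction m; simpl. exact H0.
    rewrite (Hadd (fun l => sumn m (fun L => v L * unitv L l)) (fun l => v m * unitv m l)).
    rewrite IHm, Hsc; ring. }
  rewrite <- Hm. apply Hext. intros l hl; symmetry; apply sumn_unitv; auto.
Qed.
Lemma RmapN_add c1 c2 c3 c4 k X Y a b :
  RmapN c1 c2 c3 c4 k (fun a b => X a b + Y a b) a b = RmapN c1 c2 c3 c4 k X a b + RmapN c1 c2 c3 c4 k Y a b.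
Proof. unfold RmapN, symp, tr3, sum3, Rdiv; ring. Qed.
Lemma RmapN_scal c1 c2 c3 c4 k al X a b :
  RmapN c1 c2 c3 c4 k (fun a b => al * X a b) a b = al * RmapN c1 c2 c3 c4 k X a b.
Proof. unfold RmapN, symp, tr3, sum3, Rdiv; ring. Qed.
Lemma RmapN_ext c1 c2 c3 c4 k X Y a b : eq3 X Y -> (b < 3)%nat ->
  RmapN c1 c2 c3 c4 k X a b = RmapN c1 c2 c3 c4 k Y a b.
Proof.
  intros H hb. unfold RmapN, symp, tr3, sum3.
  rewrite !H by lia. auto.
Qed.
Lemma Rmapa_add c1 c2 c3 c4 k X Y b :
  Rmapa c1 c2 c3 c4 k (fun a b => X a b + Y a b) b = Rmapa c1 c2 c3 c4 k X b + Rmapa c1 c2 c3 c4 k Y b.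
Proof. unfold Rmapa, tr3, sum3, Rdiv; ring. Qed.
Lemma Rmapa_scal c1 c2 c3 c4 k al X b :
  Rmapa c1 c2 c3 c4 k (fun a b => al * X a b) b = al * Rmapa c1 c2 c3 c4 k X b.
Proof. unfold Rmapa, tr3, sum3, Rdiv; ring. Qed.
Lemma Rmapa_ext c1 c2 c3 c4 k X Y b : eq3 X Y -> (b < 3)%nat ->
  Rmapa c1 c2 c3 c4 k X b = Rmapa c1 c2 c3 c4 k Y b.
Proof.
  intros H hb. unfold Rmapa, tr3, sum3.
  rewrite !H by lia. auto.
Qed.
Lemma QX_add c1 c4 k N N' av av' a b :
  QX c1 c4 k (fun a b => N a b + N' a b) (fun b => av b + av' b) a b
  = QX c1 c4 k N av a b + QX c1 c4 k N' av' a b.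
Proof. unfold QX, sum3; ring. Qed.
Lemma QX_scal c1 c4 k al N av a b :
  QX c1 c4 k (fun a b => al * N a b) (fun b => al * av b) a b = al * QX c1 c4 k N av a b.
Proof. unfold QX, sum3; ring. Qed.
Lemma LinvE_add c1 c2 c3 X Y a b :
  LinvE c1 c2 c3 (fun a b => X a b + Y a b) a b = LinvE c1 c2 c3 X a b + LinvE c1 c2 c3 Y a b.
Proof. unfold LinvE, tr3, sum3, Rdiv; ring. Qed.
Lemma LinvE_scal c1 c2 c3 al X a b :
  LinvE c1 c2 c3 (fun a b => al * X a b) a b = al * LinvE c1 c2 c3 X a b.
Proof. unfold LinvE, tr3, sum3, Rdiv; ring. Qed.

Lemma QmapE_add c1 c2 c3 c4 k N N' av av' a b : (a < 3)%nat -> (b < 3)%nat ->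
  QmapE c1 c2 c3 c4 k (fun a b => N a b + N' a b) (fun b => av b + av' b) a b
  = QmapE c1 c2 c3 c4 k N av a b + QmapE c1 c2 c3 c4 k N' av' a b.
Proof.
  intros ha hb. unfold QmapE. rewrite <- LinvE_add. apply LinvE_ext; auto.
  intros x y _ _; apply QX_add.
Qed.
Lemma QmapE_scal c1 c2 c3 c4 k al N av a b : (a < 3)%nat -> (b < 3)%nat ->
  QmapE c1 c2 c3 c4 k (fun a b => al * N a b) (fun b => al * av b) a b
  = al * QmapE c1 c2 c3 c4 k N av a b.
Proof.
  intros ha hb. unfold QmapE. rewrite <- LinvE_scal. apply LinvE_ext; auto.
  intros x y _ _; apply QX_scal.
Qed.
Lemma QmapE_ext c1 c2 c3 c4 k N N' av av' a b : eq3 N N' -> (forall b, (b < 3)%nat -> av b = av' b) ->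
  (a < 3)%nat -> (b < 3)%nat ->
  QmapE c1 c2 c3 c4 k N av a b = QmapE c1 c2 c3 c4 k N' av' a b.
Proof. intros H1 H2 ha hb. unfold QmapE. apply LinvE_ext; auto. apply QX_ext; auto. Qed.

Lemma MmapE_ext c1 c2 c3 c4 k X Y a b : eq3 X Y -> (a < 3)%nat -> (b < 3)%nat ->
  MmapE c1 c2 c3 c4 k X a b = MmapE c1 c2 c3 c4 k Y a b.
Proof.
  intros H ha hb. unfold MmapE. apply QmapE_ext; auto.
  - intros x y hx hy; apply RmapN_ext; auto.
  - intros x hx; apply Rmapa_ext; auto.
Qed.
Lemma MmapE_add c1 c2 c3 c4 k X Y a b : (a < 3)%nat -> (b < 3)%nat ->
  MmapE c1 c2 c3 c4 k (fun a b => X a b + Y a b) a b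
  = MmapE c1 c2 c3 c4 k X a b + MmapE c1 c2 c3 c4 k Y a b.
Proof.
  intros ha hb. unfold MmapE. rewrite <- QmapE_add by auto. apply QmapE_ext; auto.
  - intros x y hx hy; apply RmapN_add.
  - intros x hx; apply Rmapa_add.
Qed.
Lemma MmapE_scal c1 c2 c3 c4 k al X a b : (a < 3)%nat -> (b < 3)%nat ->
  MmapE c1 c2 c3 c4 k (fun a b => al * X a b) a b = al * MmapE c1 c2 c3 c4 k X a b.
Proof.
  intros ha hb. unfold MmapE. rewrite <- QmapE_scal by auto. apply QmapE_ext; auto.
  - intros x y hx hy; apply RmapN_scal.
  - intros x hx; apply Rmapa_scal.
Qed.
Definition rho9 (F : mat) : mat := fun I J => F (I / 3)%nat (J / 3)%nat * F (I mod 3)%nat (J mod 3)%nat.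
Definition rho21 (F : mat) : mat := fun I J =>
  if (I <? 9)%nat then (if (J <? 9)%nat then rho9 F I J else 0)
  else if (I <? 18)%nat then (if (J <? 9)%nat then 0 else if (J <? 18)%nat then rho9 F (I - 9)%nat (J - 9)%nat else 0)
  else (if (J <? 18)%nat then 0 else F (I - 18)%nat (J - 18)%nat).

Lemma div3_lt I : (I < 9)%nat -> (I / 3 < 3)%nat.
Proof. intros; apply Nat.Div0.div_lt_upper_bound; lia. Qed.
Lemma mod3_lt I : (I mod 3 < 3)%nat.
Proof. apply Nat.mod_upper_bound; lia. Qed.
Lemma I3 I : I = (3 * (I / 3) + I mod 3)%nat.
Proof. apply Nat.div_mod; lia. Qed.

Lemma rho9_rot F X I : sumn 9 (fun L => rho9 F I L * X (L / 3)%nat (L mod 3)%nat) = rot F X (I / 3)%nat (I mod 3)%nat.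
Proof. unfold rho9, rot; simpl; unfold sum3; ring. Qed.

Lemma Kof_col9 F J : (J < 9)%nat -> eq3 (Kof (fun L => rho9 F L J)) (rot F (Kof (unitv J))).
Proof.
  intros hJ a b ha hb. unfold Kof, rho9, rot, unitv.
  do 9 (destruct J as [|J]; [lt3 a; lt3 b; simpl; unfold sum3; simpl; ring|]). lia.
Qed.

Lemma Mmat_equiv c1 c2 c3 c4 F k I J : hyps c1 c2 c3 c4 -> frame F k -> (I < 9)%nat -> (J < 9)%nat ->
  mmul 9 (Mmat c1 c2 c3 c4 k) (rho9 F) I J = mmul 9 (rho9 F) (Mmat c1 c2 c3 c4 e3) I J.
Proof.
  intros H Hf hI hJ. pose proof (div3_lt I hI) as ha. pose proof (mod3_lt I) as hb.
  unfold mmul, Mmat.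
  transitivity (sumn 9 (fun L => MmapE c1 c2 c3 c4 k (Kof (unitv L)) (I / 3)%nat (I mod 3)%nat * rho9 F L J)).
  { apply sumn_ext; intros; rewrite Mmap_eq; auto. }
  rewrite <- (lin_sum 9 (fun v => MmapE c1 c2 c3 c4 k (Kof v) (I / 3)%nat (I mod 3)%nat)).
  - rewrite (MmapE_ext c1 c2 c3 c4 k _ (rot F (Kof (unitv J)))) by (auto; apply Kof_col9; auto).
    rewrite MmapE_rot; auto. rewrite <- rho9_rot. apply sumn_ext; intros L hL.
    rewrite Mmap_eq; auto. apply div3_lt; auto. apply mod3_lt.
  - intros v w. exact (MmapE_add c1 c2 c3 c4 k (Kof v) (Kof w) _ _ ha hb).
  - intros al v. exact (MmapE_scal c1 c2 c3 c4 k al (Kof v) _ _ ha hb).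
  - intros v w Hvw. apply MmapE_ext; auto. intros x y hx hy; unfold Kof; apply Hvw; lia.
Qed.

Lemma delta_div3 I J : delta (I / 3)%nat (J / 3)%nat * delta (I mod 3)%nat (J mod 3)%nat = delta I J.
Proof.
  destruct (Nat.eq_dec I J) as [->|hne]. rewrite !delta_refl; ring.
  rewrite (delta_neq I J hne).
  destruct (Nat.eq_dec (I / 3) (J / 3)) as [e1|n1].
  - rewrite (delta_neq (I mod 3)); [ring|]. intros e2. apply hne. rewrite (I3 I), (I3 J), e1, e2; auto.
  - rewrite delta_neq; auto; ring.
Qed.

Lemma rho9_orth1 F k I J : frame F k -> (I < 9)%nat -> (J < 9)%nat ->
  mmul 9 (rho9 F) (transp (rho9 F)) I J = delta I J.
Proof.
  intros (h1 & h2 & _) hI hJ. rewrite <- delta_div3.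
  rewrite <- (h1 (I/3)%nat (J/3)%nat), <- (h1 (I mod 3)%nat (J mod 3)%nat);
    try apply div3_lt; try apply mod3_lt; auto.
  unfold mmul, rho9, transp; simpl; unfold sum3; ring.
Qed.

Lemma rho9_orth2 F k I J : frame F k -> (I < 9)%nat -> (J < 9)%nat ->
  mmul 9 (transp (rho9 F)) (rho9 F) I J = delta I J.
Proof.
  intros (h1 & h2 & _) hI hJ. rewrite <- delta_div3.
  rewrite <- (h2 (I/3)%nat (J/3)%nat), <- (h2 (I mod 3)%nat (J mod 3)%nat);
    try apply div3_lt; try apply mod3_lt; auto.
  unfold mmul, rho9, transp; simpl; unfold sum3; ring.
Qed.
Definition PmapE (c1 c2 c3 c4 : R) (k : nat -> R) (v : vec) : vec :=
  fun i =>
    if Nat.ltb i 9 then QmapE c1 c2 c3 c4 k (Nof v) (aof v) (i / 3)%nat (i mod 3)%nat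
    else if Nat.ltb i 18 then RmapN c1 c2 c3 c4 k (Kof v) ((i - 9) / 3)%nat ((i - 9) mod 3)%nat
    else Rmapa c1 c2 c3 c4 k (Kof v) (i - 18)%nat.

Lemma Pmap_eq c1 c2 c3 c4 k v i : hyps c1 c2 c3 c4 -> Pmap c1 c2 c3 c4 k v i = PmapE c1 c2 c3 c4 k v i.
Proof.
  intros H. unfold Pmap, PmapE. destruct (Nat.ltb_spec i 9); auto.
  apply Qmap_eq; auto. apply div3_lt; auto. apply mod3_lt.
Qed.

Lemma PmapE_lin c1 c2 c3 c4 k i v : (i < 21)%nat ->
  PmapE c1 c2 c3 c4 k v i = sumn 21 (fun L => PmapE c1 c2 c3 c4 k (unitv L) i * v L).
Proof.
  intros hi. apply (lin_sum 21 (fun v => PmapE c1 c2 c3 c4 k v i)).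
  - intros v1 v2. unfold PmapE. destruct (Nat.ltb_spec i 9).
    + exact (QmapE_add c1 c2 c3 c4 k (Nof v1) (Nof v2) (aof v1) (aof v2) _ _ (div3_lt i H) (mod3_lt i)).
    + destruct (Nat.ltb_spec i 18).
      * exact (RmapN_add c1 c2 c3 c4 k (Kof v1) (Kof v2) _ _).
      * exact (Rmapa_add c1 c2 c3 c4 k (Kof v1) (Kof v2) _).
  - intros al v1. unfold PmapE. destruct (Nat.ltb_spec i 9).
    + exact (QmapE_scal c1 c2 c3 c4 k al (Nof v1) (aof v1) _ _ (div3_lt i H) (mod3_lt i)).
    + destruct (Nat.ltb_spec i 18).
      * exact (RmapN_scal c1 c2 c3 c4 k al (Kof v1) _ _).
      * exact (Rmapa_scal c1 c2 c3 c4 k al (Kof v1) _).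
  - intros v1 v2 Hv. unfold PmapE. destruct (Nat.ltb_spec i 9).
    + apply QmapE_ext; try apply div3_lt; try apply mod3_lt; auto.
      * intros x y hx hy; unfold Nof; apply Hv; lia.
      * intros x hx; unfold aof; apply Hv; lia.
    + assert (HK : eq3 (Kof v1) (Kof v2)) by (intros x y hx hy; unfold Kof; apply Hv; lia).
      destruct (Nat.ltb_spec i 18).
      * apply RmapN_ext; auto. apply mod3_lt.
      * destruct (Nat.lt_ge_cases i 21); [|lia]. apply Rmapa_ext; auto. lia.
Qed.

Definition Vrot (F : mat) (v : vec) : vec := fun l => sumn 21 (fun L => rho21 F l L * v L).

Lemma Kof_Vrot F v : eq3 (Kof (Vrot F v)) (rot F (Kof v)).
Proof. intros a b ha hb. lt3 a; lt3 b; unfold Kof, Vrot, rho21, rho9, rot; unfold sum3; simpl; ring. Qed.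
Lemma Nof_Vrot F v : eq3 (Nof (Vrot F v)) (rot F (Nof v)).
Proof. intros a b ha hb. lt3 a; lt3 b; unfold Nof, Vrot, rho21, rho9, rot; unfold sum3; simpl; ring. Qed.
Lemma aof_Vrot F v b : (b < 3)%nat -> aof (Vrot F v) b = rotv F (aof v) b.
Proof. intros hb. lt3 b; unfold aof, Vrot, rho21, rotv; unfold sum3; simpl; ring. Qed.

Lemma PmapE_Vrot c1 c2 c3 c4 F k v I : hyps c1 c2 c3 c4 -> frame F k -> (I < 21)%nat ->
  PmapE c1 c2 c3 c4 k (Vrot F v) I = Vrot F (PmapE c1 c2 c3 c4 e3 v) I.
Proof.
  intros H Hf hI. pose proof H as (h1 & h2 & h3).
  do 21 (destruct I as [|I];
   [ unfold PmapE at 1; simpl;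
     first
     [ rewrite (QmapE_ext c1 c2 c3 c4 k _ (rot F (Nof v)) _ (rotv F (aof v)))
         by (auto; try apply Nof_Vrot; intros; apply aof_Vrot; auto);
       rewrite QmapE_rot by auto
     | rewrite (RmapN_ext c1 c2 c3 c4 k _ (rot F (Kof v))) by (auto; apply Kof_Vrot);
       rewrite RmapN_rot by auto
     | rewrite (Rmapa_ext c1 c2 c3 c4 k _ (rot F (Kof v))) by (auto; apply Kof_Vrot);
       rewrite Rmapa_rot by auto ];
     unfold Vrot, PmapE, rho21, rho9, rot, rotv; simpl; unfold sum3; ring
   | ]). lia.
Qed.

Lemma Pmat_equiv c1 c2 c3 c4 F k I J : hyps c1 c2 c3 c4 -> frame F k -> (I < 21)%nat -> (J < 21)%nat ->
  mmul 21 (Pmat c1 c2 c3 c4 k) (rho21 F) I J = mmul 21 (rho21 F) (Pmat c1 c2 c3 c4 e3) I J.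
Proof.
  intros H Hf hI hJ. unfold mmul, Pmat.
  transitivity (sumn 21 (fun L => PmapE c1 c2 c3 c4 k (unitv L) I * rho21 F L J)).
  { apply sumn_ext; intros; rewrite Pmap_eq; auto. }
  rewrite <- PmapE_lin by auto.
  transitivity (PmapE c1 c2 c3 c4 k (Vrot F (unitv J)) I).
  { unfold PmapE. destruct (Nat.ltb_spec I 9).
    - apply QmapE_ext; try apply div3_lt; try apply mod3_lt; auto.
      + intros x y hx hy; unfold Nof, Vrot. symmetry. apply (sumn_delta_r 21 (fun L => rho21 F (9 + 3 * x + y)%nat L) J); auto.
      + intros x hx; unfold aof, Vrot. symmetry. apply (sumn_delta_r 21 (fun L => rho21 F (18 + x)%nat L) J); auto.
    - assert (HK : eq3 (Kof (fun L => rho21 F L J)) (Kof (Vrot F (unitv J)))).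
      { intros x y hx hy; unfold Kof, Vrot. symmetry. apply (sumn_delta_r 21 (fun L => rho21 F (3 * x + y)%nat L) J); auto. }
      destruct (Nat.ltb_spec I 18).
      + apply RmapN_ext; auto. apply mod3_lt.
      + apply Rmapa_ext; auto. lia. }
  rewrite PmapE_Vrot; auto. unfold Vrot. apply sumn_ext; intros L hL. rewrite Pmap_eq; auto.
Qed.
Lemma delta_shift n I J : (n <= I)%nat -> (n <= J)%nat -> delta I J = delta (I - n) (J - n).
Proof.
  intros h1 h2. unfold delta. destruct (Nat.eqb_spec I J); destruct (Nat.eqb_spec (I - n) (J - n)); auto; lia.
Qed.

Ltac rw_ltb := repeat match goal with
  | |- context [(?X <? ?n)%nat] => first [ rewrite (proj2 (Nat.ltb_lt X n)) by lia
                                        | rewrite (proj2 (Nat.ltb_ge X n)) by lia ] end.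

Lemma rho21_orth_gen F k I J (trans : bool) : frame F k -> (I < 21)%nat -> (J < 21)%nat ->
  sumn 21 (fun L => (if trans then rho21 F L I * rho21 F L J else rho21 F I L * rho21 F J L)) = delta I J.
Proof.
  intros Hf hI hJ. pose proof Hf as (h1 & h2 & _).
  assert (HI : (I < 9 \/ 9 <= I < 18 \/ 18 <= I)%nat) by lia.
  assert (HJ : (J < 9 \/ 9 <= J < 18 \/ 18 <= J)%nat) by lia.
  destruct HI as [a|[a|a]]; destruct HJ as [b|[b|b]];
  try (rewrite delta_neq by lia; destruct trans; unfold rho21; simpl; rw_ltb; ring);
  destruct trans; unfold rho21; simpl; rw_ltb.
  - rewrite <- (rho9_orth2 F k I J Hf) by lia. unfold mmul, rho9, transp; simpl; ring.
  - rewrite <- (rho9_orth1 F k I J Hf) by lia. unfold mmul, rho9, transp; simpl; ring.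
  - rewrite (delta_shift 9 I J), <- (rho9_orth2 F k (I-9) (J-9) Hf) by lia.
    unfold mmul, rho9, transp; simpl; ring.
  - rewrite (delta_shift 9 I J), <- (rho9_orth1 F k (I-9) (J-9) Hf) by lia.
    unfold mmul, rho9, transp; simpl; ring.
  - rewrite (delta_shift 18 I J), <- (h2 (I-18)%nat (J-18)%nat) by lia. unfold sum3; ring.
  - rewrite (delta_shift 18 I J), <- (h1 (I-18)%nat (J-18)%nat) by lia. unfold sum3; ring.
Qed.

Lemma rho21_orth1 F k I J : frame F k -> (I < 21)%nat -> (J < 21)%nat ->
  mmul 21 (rho21 F) (transp (rho21 F)) I J = delta I J.
Proof. intros; apply (rho21_orth_gen F k I J false); auto. Qed.
Lemma rho21_orth2 F k I J : frame F k -> (I < 21)%nat -> (J < 21)%nat ->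
  mmul 21 (transp (rho21 F)) (rho21 F) I J = delta I J.
Proof. intros; apply (rho21_orth_gen F k I J true); auto. Qed.
Definition Bsc_q (c1 c2 c3 c4 q p : R) : R :=
  let sg := (c1 + c3 + c2) * p + 2 * c2 * q in
  let trS := (2 * q + sg / 2 + sg / (c1 + c4)) / (1 - (c1 + c3) + 3 / 2 * (c1 + c2 + c3)) in
  (q + sg / 2 - (c1 + c2 + c3) * trS / 2) / (1 - (c1 + c3)).
Definition Bsc_p (c1 c2 c3 c4 q p : R) : R :=
  let sg := (c1 + c3 + c2) * p + 2 * c2 * q in
  let trS := (2 * q + sg / 2 + sg / (c1 + c4)) / (1 - (c1 + c3) + 3 / 2 * (c1 + c2 + c3)) in
  (sg / (c1 + c4) - sg / 2 - (c1 + c2 + c3) * trS / 2) / (1 - (c1 + c3)).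
Definition Bv_s (c1 c3 c4 s t : R) : R :=
  let X1 := (1 - (c1 + c3) / 2) * s - (c1 + c3) / 2 * t in
  let X2 := (c3 * s + c1 * t) / (c1 + c4) in
  (X1 - X2) / 2 + (X1 + X2) / (2 * (1 - (c1 + c3))).
Definition Bv_t (c1 c3 c4 s t : R) : R :=
  let X1 := (1 - (c1 + c3) / 2) * s - (c1 + c3) / 2 * t in
  let X2 := (c3 * s + c1 * t) / (c1 + c4) in
  - (X1 - X2) / 2 + (X1 + X2) / (2 * (1 - (c1 + c3))).

Definition M0F (c1 c2 c3 c4 : R) (K : M3) : M3 := fun a b =>
  let q := (K 0%nat 0%nat + K 1%nat 1%nat) / 2 in
  let p := K 2%nat 2%nat in
  let t1 := (K 0%nat 0%nat - K 1%nat 1%nat) / 2 in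
  let t2 := (K 0%nat 1%nat + K 1%nat 0%nat) / 2 in
  let r := (K 0%nat 1%nat - K 1%nat 0%nat) / 2 in
  let lT := / (1 - (c1 + c3)) in
  match a, b with
  | 0%nat, 0%nat => Bsc_q c1 c2 c3 c4 q p + lT * t1
  | 1%nat, 1%nat => Bsc_q c1 c2 c3 c4 q p - lT * t1
  | 2%nat, 2%nat => Bsc_p c1 c2 c3 c4 q p
  | 0%nat, 1%nat => r + lT * t2
  | 1%nat, 0%nat => - r + lT * t2
  | 0%nat, 2%nat => Bv_s c1 c3 c4 (K 0%nat 2%nat) (K 2%nat 0%nat)
  | 2%nat, 0%nat => Bv_t c1 c3 c4 (K 0%nat 2%nat) (K 2%nat 0%nat)
  | 1%nat, 2%nat => Bv_s c1 c3 c4 (K 1%nat 2%nat) (K 2%nat 1%nat)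
  | 2%nat, 1%nat => Bv_t c1 c3 c4 (K 1%nat 2%nat) (K 2%nat 1%nat)
  | _, _ => 0
  end.

Lemma M0_formula c1 c2 c3 c4 K a b : hyps c1 c2 c3 c4 -> (a < 3)%nat -> (b < 3)%nat ->
  MmapE c1 c2 c3 c4 e3 K a b = M0F c1 c2 c3 c4 K a b.
Proof.
  intros (h1 & h2 & h3) ha hb. pose proof (D3_ne _ _ _ h3) as h4.
  assert (h5 : 1 - (c1 + c3) <> 0) by lra.
  unfold MmapE, QmapE, LinvE, QX, RmapN, Rmapa, M0F, Bsc_q, Bsc_p, Bv_s, Bv_t, e3, kvec, symp, tr3, delta.
  lt3 a; lt3 b; unfold sum3; simpl; field; nzl.
Qed.
Lemma diag2 b11 b12 b21 b22 l1 l2 : l1 <> l2 -> b11 + b22 = l1 + l2 -> b11 * b22 - b12 * b21 = l1 * l2 ->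
  exists t11 t12 t21 t22 s11 s12 s21 s22 : R,
    b11 * t11 + b12 * t21 = t11 * l1 /\ b21 * t11 + b22 * t21 = t21 * l1 /\
    b11 * t12 + b12 * t22 = t12 * l2 /\ b21 * t12 + b22 * t22 = t22 * l2 /\
    t11 * s11 + t12 * s21 = 1 /\ t11 * s12 + t12 * s22 = 0 /\
    t21 * s11 + t22 * s21 = 0 /\ t21 * s12 + t22 * s22 = 1 /\
    s11 * t11 + s12 * t21 = 1 /\ s11 * t12 + s12 * t22 = 0 /\
    s21 * t11 + s22 * t21 = 0 /\ s21 * t12 + s22 * t22 = 1.
Proof.
  intros hl htr hdet.
  assert (hl' : l2 - l1 <> 0) by lra.
  assert (hq : forall l, l = l1 \/ l = l2 -> l * l - (l1 + l2) * l + l1 * l2 = 0) by (intros l [->| ->]; ring).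
  destruct (Req_dec b12 0) as [hb|hb].
  - subst b12.
    assert (hb2 : (b11 - l1) * (b11 - l2) = 0) by nra.
    destruct (Rmult_integral _ _ hb2) as [e|e].
    + assert (E1 : b11 = l1) by lra. assert (E2 : b22 = l2) by lra. subst b11 b22.
      exists (l1 - l2), 0, b21, 1, (/ (l1 - l2)), 0, (- b21 / (l1 - l2)), 1.
      assert (l1 - l2 <> 0) by lra.
      repeat split; field; auto.
    + assert (E1 : b11 = l2) by lra. assert (E2 : b22 = l1) by lra. subst b11 b22.
      exists 0, (l2 - l1), 1, b21, (- b21 / (l2 - l1)), 1, (/ (l2 - l1)), 0.
      repeat split; field; auto.
  - exists b12, b12, (l1 - b11), (l2 - b11),
      ((l2 - b11) / (b12 * (l2 - l1))), (- b12 / (b12 * (l2 - l1))),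
      (- (l1 - b11) / (b12 * (l2 - l1))), (b12 / (b12 * (l2 - l1))).
    assert (hb21 : b12 * b21 = b11 * b22 - l1 * l2) by lra.
    assert (hb22 : b22 = l1 + l2 - b11) by lra.
    repeat split; try (field; split; auto).
    + rewrite hb22; nra.
    + rewrite hb22; nra.
Qed.

Definition blk9 (s11 s12 s21 s22 v11 v12 v21 v22 d6 d7 d8 : R) : mat := fun I J =>
  match I, J with
  | 0%nat, 0%nat => s11 | 0%nat, 1%nat => s12 | 1%nat, 0%nat => s21 | 1%nat, 1%nat => s22
  | 2%nat, 2%nat => v11 | 2%nat, 3%nat => v12 | 3%nat, 2%nat => v21 | 3%nat, 3%nat => v22
  | 4%nat, 4%nat => v11 | 4%nat, 5%nat => v12 | 5%nat, 4%nat => v21 | 5%nat, 5%nat => v22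
  | 6%nat, 6%nat => d6 | 7%nat, 7%nat => d7 | 8%nat, 8%nat => d8
  | _, _ => 0 end.

Definition mu9 (a0 a1 a2 a3 a6 a7 a8 : R) : nat -> R := fun j =>
  match j with 0%nat => a0 | 1%nat => a1 | 2%nat => a2 | 3%nat => a3 | 4%nat => a2 | 5%nat => a3
  | 6%nat => a6 | 7%nat => a7 | _ => a8 end.

Ltac d9 i := destruct i as [|[|[|[|[|[|[|[|[|?]]]]]]]]]; [ | | | | | | | | | exfalso; lia].

Lemma blk9_diag (P : R -> Prop) b11 b12 b21 b22 l1 l2 v11 v12 v21 v22 m1 m2 d6 d7 d8 :
  l1 <> l2 -> b11 + b22 = l1 + l2 -> b11 * b22 - b12 * b21 = l1 * l2 ->
  m1 <> m2 -> v11 + v22 = m1 + m2 -> v11 * v22 - v12 * v21 = m1 * m2 ->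
  P l1 -> P l2 -> P m1 -> P m2 -> P d6 -> P d7 -> P d8 ->
  diagonalizable_with 9 (blk9 b11 b12 b21 b22 v11 v12 v21 v22 d6 d7 d8) P.
Proof.
  intros hl1 hl2 hl3 hm1 hm2 hm3 p1 p2 p3 p4 p6 p7 p8.
  destruct (diag2 _ _ _ _ _ _ hl1 hl2 hl3) as (t11 & t12 & t21 & t22 & s11 & s12 & s21 & s22 & e1 & e2 & e3 & e4 & e5 & e6 & e7 & e8 & e9 & e10 & e11 & e12).
  destruct (diag2 _ _ _ _ _ _ hm1 hm2 hm3) as (u11 & u12 & u21 & u22 & w11 & w12 & w21 & w22 & f1 & f2 & f3 & f4 & f5 & f6 & f7 & f8 & f9 & f10 & f11 & f12).
  exists (blk9 t11 t12 t21 t22 u11 u12 u21 u22 1 1 1), (blk9 s11 s12 s21 s22 w11 w12 w21 w22 1 1 1),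
    (mu9 l1 l2 m1 m2 d6 d7 d8).
  split; [|split; [|split]].
  - intros i j hi hj. unfold mmul. d9 i; d9 j; simpl; unfold delta; simpl; lra.
  - intros i j hi hj. unfold mmul. d9 i; d9 j; simpl; unfold delta; simpl; lra.
  - intros j hj. d9 j; simpl; auto.
  - intros i j hi hj. unfold mmul. d9 i; d9 j; simpl; lra.
Qed.
Definition Umat : mat := fun I J =>
  match I, J with
  | 0%nat, 0%nat => 1 | 4%nat, 0%nat => 1 | 8%nat, 1%nat => 1 | 2%nat, 2%nat => 1 | 6%nat, 3%nat => 1
  | 5%nat, 4%nat => 1 | 7%nat, 5%nat => 1 | 1%nat, 6%nat => 1 | 3%nat, 6%nat => -1
  | 0%nat, 7%nat => 1 | 4%nat, 7%nat => -1 | 1%nat, 8%nat => 1 | 3%nat, 8%nat => 1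
  | _, _ => 0 end.
Definition Uimat : mat := fun I J =>
  match I, J with
  | 0%nat, 0%nat => /2 | 0%nat, 4%nat => /2 | 1%nat, 8%nat => 1 | 2%nat, 2%nat => 1 | 3%nat, 6%nat => 1
  | 4%nat, 5%nat => 1 | 5%nat, 7%nat => 1 | 6%nat, 1%nat => /2 | 6%nat, 3%nat => -/2
  | 7%nat, 0%nat => /2 | 7%nat, 4%nat => -/2 | 8%nat, 1%nat => /2 | 8%nat, 3%nat => /2
  | _, _ => 0 end.

Lemma U_inv1 I J : (I < 9)%nat -> (J < 9)%nat -> mmul 9 Umat Uimat I J = delta I J.
Proof. intros hI hJ. unfold mmul. d9 I; d9 J; unfold Umat, Uimat, delta; simpl; field. Qed.
Lemma U_inv2 I J : (I < 9)%nat -> (J < 9)%nat -> mmul 9 Uimat Umat I J = delta I J.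
Proof. intros hI hJ. unfold mmul. d9 I; d9 J; unfold Umat, Uimat, delta; simpl; field. Qed.

Definition Bfull c1 c2 c3 c4 : mat :=
  blk9 (Bsc_q c1 c2 c3 c4 1 0) (Bsc_q c1 c2 c3 c4 0 1) (Bsc_p c1 c2 c3 c4 1 0) (Bsc_p c1 c2 c3 c4 0 1)
       (Bv_s c1 c3 c4 1 0) (Bv_s c1 c3 c4 0 1) (Bv_t c1 c3 c4 1 0) (Bv_t c1 c3 c4 0 1)
       1 (/ (1 - (c1 + c3))) (/ (1 - (c1 + c3))).

Lemma M0mat_eq c1 c2 c3 c4 I L : hyps c1 c2 c3 c4 -> (I < 9)%nat ->
  Mmat c1 c2 c3 c4 e3 I L = M0F c1 c2 c3 c4 (Kof (unitv L)) (I / 3)%nat (I mod 3)%nat.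
Proof.
  intros H hI. unfold Mmat. rewrite Mmap_eq, M0_formula; auto; try apply div3_lt; try apply mod3_lt; auto.
Qed.

Lemma M0_U c1 c2 c3 c4 I J : hyps c1 c2 c3 c4 -> (I < 9)%nat -> (J < 9)%nat ->
  mmul 9 (Mmat c1 c2 c3 c4 e3) Umat I J = mmul 9 Umat (Bfull c1 c2 c3 c4) I J.
Proof.
  intros H hI hJ. pose proof H as (h1 & h2 & h3). pose proof (D3_ne _ _ _ h3) as h4.
  assert (h5 : 1 - (c1 + c3) <> 0) by lra.
  unfold mmul. rewrite (sumn_ext 9 _ (fun L => M0F c1 c2 c3 c4 (Kof (unitv L)) (I / 3)%nat (I mod 3)%nat * Umat L J))
    by (intros; rewrite M0mat_eq; auto).
  d9 I; d9 J; unfold M0F, Umat, Bfull, blk9, Kof, unitv, Bsc_q, Bsc_p, Bv_s, Bv_t; simpl; field; nzl.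
Qed.

Lemma Bsc_tr c1 c2 c3 c4 : hyps c1 c2 c3 c4 ->
  Bsc_q c1 c2 c3 c4 1 0 + Bsc_p c1 c2 c3 c4 0 1 = 1 + lamS2 c1 c2 c3 c4.
Proof.
  intros (h1 & h2 & h3). pose proof (D3_ne _ _ _ h3) as h4. assert (h5 : 1 - (c1 + c3) <> 0) by lra.
  assert (h6 : 2 + 2 * c2 + (c1 + c2 + c3) <> 0) by lra.
  unfold Bsc_q, Bsc_p, lamS2. field; nzl.
Qed.
Lemma Bsc_det c1 c2 c3 c4 : hyps c1 c2 c3 c4 ->
  Bsc_q c1 c2 c3 c4 1 0 * Bsc_p c1 c2 c3 c4 0 1 - Bsc_q c1 c2 c3 c4 0 1 * Bsc_p c1 c2 c3 c4 1 0
  = 1 * lamS2 c1 c2 c3 c4.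
Proof.
  intros (h1 & h2 & h3). pose proof (D3_ne _ _ _ h3) as h4. assert (h5 : 1 - (c1 + c3) <> 0) by lra.
  assert (h6 : 2 + 2 * c2 + (c1 + c2 + c3) <> 0) by lra.
  unfold Bsc_q, Bsc_p, lamS2. field; nzl.
Qed.
Lemma Bv_tr c1 c2 c3 c4 : hyps c1 c2 c3 c4 ->
  Bv_s c1 c3 c4 1 0 + Bv_t c1 c3 c4 0 1 = 1 + lamV2 c1 c3 c4.
Proof.
  intros (h1 & h2 & h3). assert (h5 : 1 - (c1 + c3) <> 0) by lra.
  unfold Bv_s, Bv_t, lamV2. field; nzl.
Qed.
Lemma Bv_det c1 c2 c3 c4 : hyps c1 c2 c3 c4 ->
  Bv_s c1 c3 c4 1 0 * Bv_t c1 c3 c4 0 1 - Bv_s c1 c3 c4 0 1 * Bv_t c1 c3 c4 1 0 = 1 * lamV2 c1 c3 c4.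
Proof.
  intros (h1 & h2 & h3). assert (h5 : 1 - (c1 + c3) <> 0) by lra.
  unfold Bv_s, Bv_t, lamV2. field; nzl.
Qed.

Definition Mset c1 c2 c3 c4 (mu : R) : Prop :=
  mu = 1 \/ mu = lamT2 c1 c3 \/ mu = lamV2 c1 c3 c4 \/ mu = lamS2 c1 c2 c3 c4.

Lemma M0_diag c1 c2 c3 c4 : hyps c1 c2 c3 c4 -> lamV2 c1 c3 c4 <> 1 -> lamS2 c1 c2 c3 c4 <> 1 ->
  diagonalizable_with 9 (Mmat c1 c2 c3 c4 e3) (Mset c1 c2 c3 c4).
Proof.
  intros H hV hS.
  apply (diag_conj 9 _ (Bfull c1 c2 c3 c4) Umat Uimat).
  - intros; apply M0_U; auto.
  - intros; apply U_inv1; auto.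
  - intros; apply U_inv2; auto.
  - unfold Bfull. apply blk9_diag with (l1 := 1) (l2 := lamS2 c1 c2 c3 c4) (m1 := 1) (m2 := lamV2 c1 c3 c4).
    + auto.
    + apply Bsc_tr; auto.
    + apply Bsc_det; auto.
    + auto.
    + apply (Bv_tr c1 c2 c3 c4); auto.
    + apply (Bv_det c1 c2 c3 c4); auto.
    + left; auto.
    + right; right; right; auto.
    + left; auto.
    + right; right; left; auto.
    + left; auto.
    + right; left; unfold lamT2; auto.
    + right; left; unfold lamT2; auto.
Qed.
Definition Fuv (u v : R) : mat := fun a b =>
  let D := 1 + u * u + v * v in
  match a, b with
  | 0%nat, 0%nat => 1 - 2 * u * u / D | 0%nat, 1%nat => - 2 * u * v / D | 0%nat, 2%nat => 2 * u / D
  | 1%nat, 0%nat => - 2 * u * v / D | 1%nat, 1%nat => 1 - 2 * v * v / D | 1%nat, 2%nat => 2 * v / D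
  | 2%nat, 0%nat => - 2 * u / D | 2%nat, 1%nat => - 2 * v / D | 2%nat, 2%nat => (1 - u * u - v * v) / D
  | _, _ => 0 end.

Lemma Dpos u v : 0 < 1 + u * u + v * v.
Proof. nra. Qed.

Lemma Fuv_frame u v : frame (Fuv u v) (fun a => Fuv u v a 2%nat).
Proof.
  pose proof (Dpos u v) as hD. assert (hD' : 1 + u * u + v * v <> 0) by lra.
  split; [|split; [|split; [|split]]].
  - intros a b ha hb. lt3 a; lt3 b; unfold Fuv, sum3, delta; simpl; field; auto.
  - intros a b ha hb. lt3 a; lt3 b; unfold Fuv, sum3, delta; simpl; field; auto.
  - intros a ha; auto.
  - intros a b m ha hb hm. lt3 a; lt3 b; lt3 m; unfold Fuv, sum3; simpl; field; auto.
  - intros a b m ha hb hm. lt3 a; lt3 b; lt3 m; unfold Fuv, sum3; simpl; field; auto.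
Qed.

Definition Fm : mat := fun a b =>
  match a, b with
  | 0%nat, 0%nat => 1 | 1%nat, 1%nat => -1 | 2%nat, 2%nat => -1 | _, _ => 0 end.

Lemma Fm_frame : frame Fm (fun a => Fm a 2%nat).
Proof.
  split; [|split; [|split; [|split]]].
  - intros a b ha hb. lt3 a; lt3 b; unfold Fm, sum3, delta; simpl; ring.
  - intros a b ha hb. lt3 a; lt3 b; unfold Fm, sum3, delta; simpl; ring.
  - intros a ha; auto.
  - intros a b m ha hb hm. lt3 a; lt3 b; lt3 m; unfold Fm, sum3; simpl; ring.
  - intros a b m ha hb hm. lt3 a; lt3 b; lt3 m; unfold Fm, sum3; simpl; ring.
Qed.

Lemma frame_k F k k' : frame F k -> (forall a, (a < 3)%nat -> k' a = k a) -> frame F k'.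
Proof.
  intros (h1 & h2 & h3 & h4 & h5) H. split; [|split; [|split; [|split]]]; auto.
  intros a ha; rewrite H; auto.
Qed.

Lemma sphere_frame x y z : x ^ 2 + y ^ 2 + z ^ 2 = 1 -> exists F, frame F (kvec x y z).
Proof.
  intros hs. destruct (Req_dec z (-1)) as [hz|hz].
  - assert (x = 0) by nra. assert (y = 0) by nra. subst.
    exists Fm. apply (frame_k _ _ _ Fm_frame). intros a ha; lt3 a; unfold Fm, kvec; simpl; ring.
  - assert (hz' : 1 + z <> 0) by lra.
    exists (Fuv (x / (1 + z)) (y / (1 + z))). apply (frame_k _ _ _ (Fuv_frame _ _)).
    assert (E : x * x + y * y = (1 - z) * (1 + z)) by nra.
    assert (HD : 1 + x / (1 + z) * (x / (1 + z)) + y / (1 + z) * (y / (1 + z)) = 2 / (1 + z)).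
    { replace (1 + x / (1 + z) * (x / (1 + z)) + y / (1 + z) * (y / (1 + z)))
        with (1 + (x * x + y * y) / ((1 + z) * (1 + z))) by (field; auto).
      rewrite E. field; auto. }
    intros a ha; lt3 a; unfold Fuv, kvec; simpl.
    + rewrite HD; field; auto.
    + rewrite HD; field; auto.
    + replace (1 - x / (1 + z) * (x / (1 + z)) - y / (1 + z) * (y / (1 + z)))
        with (2 - (1 + x / (1 + z) * (x / (1 + z)) + y / (1 + z) * (y / (1 + z)))) by ring.
      rewrite HD; field; auto.
Qed.
Lemma sum21_W f : sumn 21 f = sumn 9 f + sumn 12 (fun l => f (9 + l)%nat).
Proof. apply (sumn_split 9 12). Qed.
Lemma sum21_3 f : sumn 21 f = sumn 9 f + sumn 9 (fun l => f (9 + l)%nat) + sumn 3 (fun l => f (18 + l)%nat).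
Proof.
  rewrite sum21_W.
  assert (E : sumn 12 (fun l => f (9 + l)%nat) = sumn 9 (fun l => f (9 + l)%nat) + sumn 3 (fun l => f (9 + (9 + l))%nat))
    by apply (sumn_split 9 3 (fun l => f (9 + l)%nat)).
  rewrite E. rewrite (sumn_ext 3 (fun l => f (9 + (9 + l))%nat) (fun l => f (18 + l)%nat)); [ring|].
  intros l _; f_equal; lia.
Qed.

Definition Qb (P : mat) : mat := fun i m => P i (9 + m)%nat.
Definition Rb (P : mat) : mat := fun m j => P (9 + m)%nat j.
Definition Mb (P : mat) : mat := fun i j => sumn 12 (fun m => Qb P i m * Rb P m j).
Definition Gb (T Ti : mat) (mu : nat -> R) : mat := fun a b => sumn 9 (fun q => T a q * Ti q b / mu q).
Definition RT (P T : mat) : mat := fun m j => sumn 9 (fun l => Rb P m l * T l j).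
Definition TiQ (P Ti : mat) : mat := fun j m => sumn 9 (fun l => Ti j l * Qb P l m).
Definition RGQ (P T Ti : mat) (mu : nat -> R) : mat := fun m1 m2 =>
  sumn 9 (fun a => sumn 9 (fun b => Rb P m1 a * Gb T Ti mu a b * Qb P b m2)).
Definition PiW (P T Ti : mat) (mu : nat -> R) : mat := fun m1 m2 => delta m1 m2 - RGQ P T Ti mu m1 m2.

Definition T21 (P T : mat) (mu : nat -> R) : mat := fun I J =>
  if (J <? 9)%nat then (if (I <? 9)%nat then T I J * sqrt (mu J) else RT P T (I - 9)%nat J)
  else if (J <? 18)%nat then (if (I <? 9)%nat then - (T I (J - 9)%nat * sqrt (mu (J - 9)%nat)) else RT P T (I - 9)%nat (J - 9)%nat)
  else delta I (J - 3).
Definition Ti21 (P T Ti : mat) (mu : nat -> R) : mat := fun J I =>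
  if (J <? 9)%nat then (if (I <? 9)%nat then Ti J I / (2 * sqrt (mu J)) else TiQ P Ti J (I - 9)%nat / (2 * mu J))
  else if (J <? 18)%nat then (if (I <? 9)%nat then - (Ti (J - 9)%nat I / (2 * sqrt (mu (J - 9)%nat)))
                              else TiQ P Ti (J - 9)%nat (I - 9)%nat / (2 * mu (J - 9)%nat))
  else (if (I <? 9)%nat then 0 else PiW P T Ti mu (J - 12)%nat (I - 9)%nat).
Definition mu21 (mu : nat -> R) : nat -> R := fun J =>
  if (J <? 9)%nat then sqrt (mu J) else if (J <? 18)%nat then - sqrt (mu (J - 9)%nat) else 0.

Definition bhyps (P T Ti : mat) (mu : nat -> R) : Prop :=
  (forall i j, (i < 9)%nat -> (j < 9)%nat -> P i j = 0) /\
  (forall i j, (9 <= i < 21)%nat -> (9 <= j < 21)%nat -> P i j = 0) /\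
  (forall i j, (i < 9)%nat -> (j < 9)%nat -> mmul 9 T Ti i j = delta i j) /\
  (forall i j, (i < 9)%nat -> (j < 9)%nat -> mmul 9 Ti T i j = delta i j) /\
  (forall j, (j < 9)%nat -> 0 < mu j) /\
  (forall i j, (i < 9)%nat -> (j < 9)%nat -> mmul 9 (Mb P) T i j = T i j * mu j) /\
  (forall i m, (i < 9)%nat -> (m < 3)%nat -> P i (15 + m)%nat = 0) /\
  (forall w, (forall i, (i < 9)%nat -> sumn 12 (fun m => Qb P i m * w m) = 0) ->
     forall m, (m < 6 \/ 9 <= m < 12)%nat -> w m = 0).


Lemma L1 P T Ti mu i b : bhyps P T Ti mu -> (i < 9)%nat -> (b < 9)%nat ->
  mmul 9 (Mb P) (Gb T Ti mu) i b = delta i b.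
Proof.
  intros (h1 & h2 & h3 & h4 & h5 & h6 & h7 & h8) hi hb.
  unfold mmul, Gb.
  transitivity (sumn 9 (fun q => mmul 9 (Mb P) T i q * (Ti q b / mu q))).
  { unfold mmul. rewrite (sumn_ext 9 _ (fun a => sumn 9 (fun q => Mb P i a * T a q * (Ti q b / mu q)))).
    - rewrite sumn_swap. apply sumn_ext; intros q hq. rewrite <- sumn_scal_r. apply sumn_ext; intros; ring.
    - intros a ha. rewrite <- sumn_scal_l. apply sumn_ext; intros q hq. unfold Rdiv; ring. }
  rewrite <- (h3 i b hi hb). unfold mmul at 2. apply sumn_ext; intros q hq. rewrite h6 by auto.
  specialize (h5 q hq). field. lra.
Qed.

Lemma L2 P T Ti mu a j : bhyps P T Ti mu -> (a < 9)%nat -> (j < 9)%nat ->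
  sumn 9 (fun b => Gb T Ti mu a b * (T b j * mu j)) = T a j.
Proof.
  intros (h1 & h2 & h3 & h4 & h5 & h6 & h7 & h8) ha hj. unfold Gb.
  transitivity (sumn 9 (fun q => T a q / mu q * mmul 9 Ti T q j * mu j)).
  { rewrite (sumn_ext 9 _ (fun b => sumn 9 (fun q => T a q / mu q * (Ti q b * T b j) * mu j))).
    - rewrite sumn_swap. apply sumn_ext; intros q hq. unfold mmul.
      rewrite <- sumn_scal_l, <- sumn_scal_r. apply sumn_ext; intros; ring.
    - intros b hb. rewrite <- sumn_scal_r. apply sumn_ext; intros q hq. unfold Rdiv; ring. }
  rewrite (sumn_ext 9 _ (fun q => T a q * (delta q j * (mu j / mu q)))).
  - rewrite (sumn_ext 9 _ (fun q => (T a q * (mu j / mu q)) * delta q j)).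
    + rewrite sumn_delta_r by auto. specialize (h5 j hj). field. lra.
    + intros; ring.
  - intros q hq. rewrite h4 by auto. specialize (h5 q hq). field. lra.
Qed.

Lemma L3 P T Ti mu b j : bhyps P T Ti mu -> (b < 9)%nat -> (j < 9)%nat ->
  sumn 12 (fun m => Qb P b m * RT P T m j) = T b j * mu j.
Proof.
  intros H hb hj. pose proof H as (h1 & h2 & h3 & h4 & h5 & h6 & h7 & h8).
  rewrite <- h6 by auto. unfold mmul, RT, Mb.
  rewrite (sumn_ext 12 _ (fun m => sumn 9 (fun l => Qb P b m * Rb P m l * T l j))).
  - rewrite sumn_swap. apply sumn_ext; intros. rewrite <- sumn_scal_r. auto.
  - intros. rewrite <- sumn_scal_l. apply sumn_ext; intros; ring.
Qed.

Lemma PV_sum P T Ti mu i X : bhyps P T Ti mu -> (i < 9)%nat ->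
  sumn 21 (fun L => P i L * X L) = sumn 12 (fun m => Qb P i m * X (9 + m)%nat).
Proof.
  intros (h1 & _) hi. rewrite sum21_W, (sumn_zero 9); [rewrite Rplus_0_l; reflexivity|]. intros l hl; rewrite h1; auto; ring.
Qed.
Lemma PW_sum P T Ti mu m X : bhyps P T Ti mu -> (m < 12)%nat ->
  sumn 21 (fun L => P (9 + m)%nat L * X L) = sumn 9 (fun l => Rb P m l * X l).
Proof.
  intros (h1 & h2 & _) hm. rewrite sum21_W, (sumn_zero 12); [rewrite Rplus_0_r; reflexivity|]. intros l hl; rewrite h2 by lia; ring.
Qed.

Ltac nsimpl := repeat match goal with |- context [(?a + ?b - ?a)%nat] => replace (a + b - a)%nat with b by lia end.

Lemma W_idx I : (9 <= I)%nat -> exists m, I = (9 + m)%nat.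
Proof. intros; exists (I - 9)%nat; lia. Qed.

Lemma sqrt_sq x : 0 < x -> sqrt x * sqrt x = x.
Proof. intros; apply sqrt_sqrt; lra. Qed.

Lemma bl_PT P T Ti mu I J : bhyps P T Ti mu -> (I < 21)%nat -> (J < 21)%nat ->
  mmul 21 P (T21 P T mu) I J = T21 P T mu I J * mu21 mu J.
Proof.
  intros H hI hJ. pose proof H as (h1 & h2 & h3 & h4 & h5 & h6 & h7 & h8). unfold mmul.
  destruct (Nat.lt_ge_cases I 9) as [hi|hi].
  - rewrite (PV_sum P T Ti mu I _ H hi).
    destruct (Nat.lt_ge_cases J 9) as [hj|hj]; [|destruct (Nat.lt_ge_cases J 18) as [hj'|hj']].
    + rewrite (sumn_ext 12 _ (fun m => Qb P I m * RT P T m J)).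
      * rewrite (L3 P T Ti mu) by auto. unfold T21, mu21; rw_ltb.
        rewrite Rmult_assoc, sqrt_sq by auto. auto.
      * intros m hm. unfold T21; rw_ltb; nsimpl; auto.
    + rewrite (sumn_ext 12 _ (fun m => Qb P I m * RT P T m (J - 9)%nat)).
      * rewrite (L3 P T Ti mu) by (auto; lia). unfold T21, mu21; rw_ltb.
        replace (- (T I (J - 9)%nat * sqrt (mu (J - 9)%nat)) * - sqrt (mu (J - 9)%nat))
          with (T I (J - 9)%nat * (sqrt (mu (J - 9)%nat) * sqrt (mu (J - 9)%nat))) by ring.
        rewrite sqrt_sq by (apply h5; lia). auto.
      * intros m hm. unfold T21; rw_ltb; nsimpl; auto.
    + rewrite (sumn_ext 12 _ (fun m => Qb P I m * delta m (J - 12)%nat)).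
      * rewrite sumn_delta_r by lia. unfold T21, mu21, Qb; rw_ltb.
        replace (9 + (J - 12))%nat with (15 + (J - 18))%nat by lia. rewrite h7 by lia. ring.
      * intros m hm. unfold T21; rw_ltb. rewrite (delta_shift 9 (9 + m)%nat (J - 3)%nat) by lia.
        nsimpl. replace (J - 3 - 9)%nat with (J - 12)%nat by lia. auto.
  - destruct (W_idx I hi) as [m ->]. rewrite (PW_sum P T Ti mu m _ H) by lia.
    destruct (Nat.lt_ge_cases J 9) as [hj|hj]; [|destruct (Nat.lt_ge_cases J 18) as [hj'|hj']].
    + rewrite (sumn_ext 9 _ (fun l => Rb P m l * T l J * sqrt (mu J))).
      * rewrite sumn_scal_r. unfold T21, mu21; rw_ltb. nsimpl. auto.
      * intros l hl. unfold T21; rw_ltb. ring.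
    + rewrite (sumn_ext 9 _ (fun l => Rb P m l * T l (J - 9)%nat * - sqrt (mu (J - 9)%nat))).
      * rewrite sumn_scal_r. unfold T21, mu21; rw_ltb. nsimpl. auto.
      * intros l hl. unfold T21; rw_ltb. ring.
    + rewrite sumn_zero.
      * unfold mu21; rw_ltb; ring.
      * intros l hl. unfold T21; rw_ltb. rewrite delta_neq by lia. ring.
Qed.

Lemma sum_assoc n m f g h : sumn n (fun x => f x * sumn m (fun a => g x a * h a))
  = sumn m (fun a => sumn n (fun x => f x * g x a) * h a).
Proof.
  rewrite (sumn_ext n _ (fun x => sumn m (fun a => f x * g x a * h a))).
  - rewrite sumn_swap. apply sumn_ext; intros. rewrite <- sumn_scal_r. auto.
  - intros. rewrite <- sumn_scal_l. apply sumn_ext; intros; ring.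
Qed.

Lemma sum_neg n f : sumn n (fun j => - f j) = - sumn n f.
Proof. rewrite (sumn_ext n _ (fun j => -1 * f j)) by (intros; ring). rewrite sumn_scal_l; ring. Qed.

Definition RG (P T Ti : mat) (mu : nat -> R) : mat := fun x b => sumn 9 (fun a => Rb P x a * Gb T Ti mu a b).
Lemma RGQ_eq P T Ti mu x m : RGQ P T Ti mu x m = sumn 9 (fun b => RG P T Ti mu x b * Qb P b m).
Proof.
  unfold RGQ, RG. rewrite (sumn_ext 9 _ (fun a => Rb P x a * sumn 9 (fun b => Gb T Ti mu a b * Qb P b m))).
  - apply sum_assoc.
  - intros. rewrite <- sumn_scal_l. apply sumn_ext; intros; ring.
Qed.

Lemma L4 P T Ti mu m m' : bhyps P T Ti mu ->
  sumn 9 (fun j => RT P T m j * TiQ P Ti j m' / mu j) = RGQ P T Ti mu m m'.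
Proof.
  intros H. rewrite RGQ_eq. unfold RT, TiQ, RG, Gb.
  transitivity (sumn 9 (fun b => sumn 9 (fun a => Rb P m a * sumn 9 (fun q => T a q * Ti q b / mu q)) * Qb P b m')).
  2: { apply sumn_ext; intros; auto. }
  rewrite (sumn_ext 9 _ (fun j => sumn 9 (fun a => Rb P m a * T a j) * / mu j * sumn 9 (fun b => Ti j b * Qb P b m')))
    by (intros; unfold Rdiv; ring).
  rewrite (sumn_ext 9 _ (fun j => sumn 9 (fun b => (sumn 9 (fun a => Rb P m a * T a j) * / mu j) * (Ti j b * Qb P b m'))))
    by (intros; rewrite <- sumn_scal_l; auto).
  rewrite sumn_swap. apply sumn_ext; intros b hb.
  rewrite (sumn_ext 9 _ (fun j => sumn 9 (fun a => Rb P m a * (T a j * Ti j b / mu j)) * Qb P b m')).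
  - rewrite sumn_scal_r. f_equal. rewrite sumn_swap. apply sumn_ext; intros a ha. rewrite <- sumn_scal_l. auto.
  - intros j hj. rewrite <- !sumn_scal_r. apply sumn_ext; intros; unfold Rdiv; ring.
Qed.

Lemma Qb_K P T Ti mu l m0 : bhyps P T Ti mu -> (l < 9)%nat -> (m0 < 3)%nat -> Qb P l (6 + m0)%nat = 0.
Proof.
  intros (h1 & h2 & h3 & h4 & h5 & h6 & h7 & h8) hl hm. unfold Qb.
  replace (9 + (6 + m0))%nat with (15 + m0)%nat by lia. apply h7; auto.
Qed.

Lemma TiQ_K P T Ti mu j m0 : bhyps P T Ti mu -> (m0 < 3)%nat -> TiQ P Ti j (6 + m0)%nat = 0.
Proof.
  intros H hm. unfold TiQ. apply sumn_zero; intros l hl. rewrite (Qb_K P T Ti mu) by auto. ring.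
Qed.

Lemma RGQ_K P T Ti mu x m0 : bhyps P T Ti mu -> (m0 < 3)%nat -> RGQ P T Ti mu x (6 + m0)%nat = 0.
Proof.
  intros H hm. rewrite RGQ_eq. apply sumn_zero; intros l hl. rewrite (Qb_K P T Ti mu) by auto. ring.
Qed.

Lemma QRGQ P T Ti mu i m' : bhyps P T Ti mu -> (i < 9)%nat -> (m' < 12)%nat ->
  sumn 12 (fun x => Qb P i x * RGQ P T Ti mu x m') = Qb P i m'.
Proof.
  intros H hi hm.
  rewrite (sumn_ext 12 _ (fun x => Qb P i x * sumn 9 (fun b => RG P T Ti mu x b * Qb P b m'))).
  2: { intros; rewrite RGQ_eq; auto. }
  rewrite sum_assoc.
  rewrite (sumn_ext 9 _ (fun b => delta i b * Qb P b m')).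
  - apply (sumn_delta_l 9 (fun b => Qb P b m') i); auto.
  - intros b hb. f_equal. rewrite <- (L1 P T Ti mu i b H hi hb). unfold RG, mmul, Mb.
    rewrite sum_assoc. auto.
Qed.

Lemma L5 P T Ti mu m m' : bhyps P T Ti mu -> (m < 6 \/ 9 <= m < 12)%nat -> (m' < 12)%nat ->
  RGQ P T Ti mu m m' = delta m m'.
Proof.
  intros H hm hm'. pose proof H as (h1 & h2 & h3 & h4 & h5 & h6 & h7 & h8).
  assert (E : PiW P T Ti mu m m' = 0).
  { apply (h8 (fun x => PiW P T Ti mu x m')); auto. intros i hi. unfold PiW.
    rewrite (sumn_ext 12 _ (fun x => Qb P i x * delta x m' - Qb P i x * RGQ P T Ti mu x m')) by (intros; ring).
    rewrite sumn_minus, sumn_delta_r by auto. rewrite QRGQ by auto. ring. }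
  unfold PiW in E. lra.
Qed.

Lemma L6 P T Ti mu j j' : bhyps P T Ti mu -> (j < 9)%nat -> (j' < 9)%nat ->
  sumn 12 (fun m => TiQ P Ti j m * RT P T m j') = delta j j' * mu j'.
Proof.
  intros H hj hj'. pose proof H as (h1 & h2 & h3 & h4 & h5 & h6 & h7 & h8). unfold TiQ.
  rewrite <- (sum_assoc 9 12 (fun l => Ti j l) (fun l m => Qb P l m) (fun m => RT P T m j')).
  rewrite (sumn_ext 9 _ (fun l => Ti j l * T l j' * mu j')).
  - rewrite sumn_scal_r. rewrite <- h4 by auto. auto.
  - intros l hl. rewrite (L3 P T Ti mu) by auto. ring.
Qed.

Lemma L7 P T Ti mu x j' : bhyps P T Ti mu -> (j' < 9)%nat ->
  sumn 12 (fun m => RGQ P T Ti mu x m * RT P T m j') = RT P T x j'.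
Proof.
  intros H hj'.
  rewrite (sumn_ext 12 _ (fun m => sumn 9 (fun b => RG P T Ti mu x b * Qb P b m) * RT P T m j'))
    by (intros; rewrite RGQ_eq; auto).
  rewrite <- (sum_assoc 9 12 (fun b => RG P T Ti mu x b) (fun b m => Qb P b m) (fun m => RT P T m j')).
  rewrite (sumn_ext 9 _ (fun b => RG P T Ti mu x b * (T b j' * mu j'))) by (intros; rewrite (L3 P T Ti mu) by auto; auto).
  unfold RG. rewrite <- (sum_assoc 9 9 (fun a => Rb P x a) (fun a b => Gb T Ti mu a b) (fun b => T b j' * mu j')).
  unfold RT. apply sumn_ext; intros a ha. rewrite (L2 P T Ti mu) by auto. auto.
Qed.

Lemma sqrt_pos' x : 0 < x -> 0 < sqrt x.
Proof. apply sqrt_lt_R0. Qed.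

Lemma bl_TTi P T Ti mu I I' : bhyps P T Ti mu -> (I < 21)%nat -> (I' < 21)%nat ->
  mmul 21 (T21 P T mu) (Ti21 P T Ti mu) I I' = delta I I'.
Proof.
  intros H hI hI'. pose proof H as (h1 & h2 & h3 & h4 & h5 & h6 & h7 & h8). unfold mmul. rewrite sum21_3.
  destruct (Nat.lt_ge_cases I 9) as [hi|hi].
  - rewrite (sumn_zero 3 (fun m => T21 P T mu I (18 + m)%nat * Ti21 P T Ti mu (18 + m)%nat I')).
    2: { intros m hm. unfold T21. rw_ltb. rewrite delta_neq by lia. ring. }
    destruct (Nat.lt_ge_cases I' 9) as [hi'|hi'].
    + rewrite (sumn_ext 9 _ (fun j => T I j * Ti j I' * / 2)).
      2: { intros j hj. unfold T21, Ti21; rw_ltb. pose proof (sqrt_pos' _ (h5 j hj)). field. lra. }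
      rewrite (sumn_ext 9 (fun l => T21 P T mu I (9 + l)%nat * Ti21 P T Ti mu (9 + l)%nat I') (fun j => T I j * Ti j I' * / 2)).
      2: { intros j hj. unfold T21, Ti21; rw_ltb. nsimpl. pose proof (sqrt_pos' _ (h5 j hj)). field. lra. }
      rewrite !sumn_scal_r. rewrite <- (h3 I I') by auto. unfold mmul. field.
    + destruct (W_idx I' hi') as [m' ->].
      rewrite (sumn_ext 9 (fun l => T21 P T mu I (9 + l)%nat * Ti21 P T Ti mu (9 + l)%nat (9 + m')%nat)
                 (fun j => - (T I j * sqrt (mu j) * (TiQ P Ti j m' / (2 * mu j))))).
      2: { intros j hj. unfold T21, Ti21; rw_ltb. nsimpl. ring. }
      rewrite sum_neg. rewrite (sumn_ext 9 _ (fun j => T I j * sqrt (mu j) * (TiQ P Ti j m' / (2 * mu j)))).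
      2: { intros j hj. unfold T21, Ti21; rw_ltb. nsimpl. auto. }
      rewrite delta_neq by lia. ring.
  - destruct (W_idx I hi) as [m ->].
    destruct (Nat.lt_ge_cases I' 9) as [hi'|hi'].
    + rewrite (sumn_zero 3 (fun m0 => T21 P T mu (9 + m)%nat (18 + m0)%nat * Ti21 P T Ti mu (18 + m0)%nat I')).
      2: { intros m0 hm0. unfold Ti21. rw_ltb. ring. }
      rewrite (sumn_ext 9 (fun l => T21 P T mu (9 + m)%nat (9 + l)%nat * Ti21 P T Ti mu (9 + l)%nat I')
                 (fun j => - (RT P T m j * (Ti j I' / (2 * sqrt (mu j)))))).
      2: { intros j hj. unfold T21, Ti21; rw_ltb. nsimpl. ring. }
      rewrite sum_neg. rewrite (sumn_ext 9 _ (fun j => RT P T m j * (Ti j I' / (2 * sqrt (mu j))))).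
      2: { intros j hj. unfold T21, Ti21; rw_ltb. nsimpl. auto. }
      rewrite delta_neq by lia. ring.
    + destruct (W_idx I' hi') as [m' ->].
      rewrite (sumn_ext 9 (fun l => T21 P T mu (9 + m)%nat l * Ti21 P T Ti mu l (9 + m')%nat) (fun j => RT P T m j * TiQ P Ti j m' / mu j * / 2)).
      2: { intros j hj. unfold T21, Ti21; rw_ltb. nsimpl. pose proof (h5 j hj). field. lra. }
      rewrite (sumn_ext 9 (fun l => T21 P T mu (9 + m)%nat (9 + l)%nat * Ti21 P T Ti mu (9 + l)%nat (9 + m')%nat) (fun j => RT P T m j * TiQ P Ti j m' / mu j * / 2)).
      2: { intros j hj. unfold T21, Ti21; rw_ltb. nsimpl. pose proof (h5 j hj). field. lra. }
      rewrite !sumn_scal_r, (L4 P T Ti mu) by auto.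
      rewrite (delta_shift 9 (9 + m) (9 + m')) by lia. nsimpl.
      destruct (Nat.lt_ge_cases m 6) as [hm|hm]; [|destruct (Nat.lt_ge_cases m 9) as [hm2|hm2]].
      * rewrite sumn_zero. rewrite (L5 P T Ti mu) by (auto; lia). field.
        intros m0 hm0. unfold T21; rw_ltb. rewrite delta_neq by lia. ring.
      * rewrite (sumn_ext 3 _ (fun m0 => delta (m - 6)%nat m0 * PiW P T Ti mu m m')).
        2: { intros m0 hm0. unfold T21, Ti21; rw_ltb.
             replace (9 + m)%nat with (9 + m)%nat by auto.
             rewrite (delta_shift 9 (9 + m) (18 + m0 - 3)) by lia. nsimpl.
             replace (18 + m0 - 3 - 9)%nat with (6 + m0)%nat by lia.
             replace (18 + m0 - 12)%nat with (6 + m0)%nat by lia.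
             replace (18 + m0 - 9)%nat with (9 + m0)%nat by lia.
             destruct (Nat.eq_dec m0 (m - 6)) as [e|e].
             - subst m0. replace (6 + (m - 6))%nat with m by lia. rewrite !delta_refl; ring.
             - rewrite !delta_neq by lia. ring. }
        rewrite (sumn_delta_l 3 (fun m0 => PiW P T Ti mu m m')) by lia. unfold PiW. field.
      * rewrite sumn_zero. rewrite (L5 P T Ti mu) by (auto; lia). field.
        intros m0 hm0. unfold T21; rw_ltb. rewrite delta_neq by lia. ring.
Qed.

Lemma bl_TiT P T Ti mu J J' : bhyps P T Ti mu -> (J < 21)%nat -> (J' < 21)%nat ->
  mmul 21 (Ti21 P T Ti mu) (T21 P T mu) J J' = delta J J'.
Proof.
  intros H hJ hJ'. pose proof H as (h1 & h2 & h3 & h4 & h5 & h6 & h7 & h8). unfold mmul. rewrite sum21_W.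
  assert (CJ : (J < 9 \/ 9 <= J < 18 \/ 18 <= J)%nat) by lia.
  assert (CJ' : (J' < 9 \/ 9 <= J' < 18 \/ 18 <= J')%nat) by lia.
  destruct CJ as [a|[a|a]]; destruct CJ' as [b|[b|b]].
  -
    rewrite (sumn_ext 9 _ (fun i => Ti J i * T i J' * (sqrt (mu J') / (2 * sqrt (mu J))))).
    2: { intros i hi. unfold T21, Ti21; rw_ltb. pose proof (sqrt_pos' _ (h5 J a)). field. lra. }
    rewrite (sumn_ext 12 _ (fun m => TiQ P Ti J m * RT P T m J' * / (2 * mu J))).
    2: { intros m hm. unfold T21, Ti21; rw_ltb. nsimpl. pose proof (h5 J a). field. lra. }
    rewrite !sumn_scal_r. rewrite (L6 P T Ti mu) by auto. fold (mmul 9 Ti T J J'). rewrite h4 by auto.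
    destruct (Nat.eq_dec J J') as [->|ne].
    + rewrite delta_refl. pose proof (sqrt_pos' _ (h5 J' b)). pose proof (h5 J' b). field. lra.
    + rewrite delta_neq by auto. ring.
  -
    rewrite (sumn_ext 9 _ (fun i => Ti J i * T i (J' - 9)%nat * - (sqrt (mu (J' - 9)%nat) / (2 * sqrt (mu J))))).
    2: { intros i hi. unfold T21, Ti21; rw_ltb. pose proof (sqrt_pos' _ (h5 J a)). field. lra. }
    rewrite (sumn_ext 12 _ (fun m => TiQ P Ti J m * RT P T m (J' - 9)%nat * / (2 * mu J))).
    2: { intros m hm. unfold T21, Ti21; rw_ltb. nsimpl. pose proof (h5 J a). field. lra. }
    rewrite !sumn_scal_r. rewrite (L6 P T Ti mu) by (auto; lia). fold (mmul 9 Ti T J (J' - 9)%nat). rewrite h4 by lia.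
    rewrite (delta_neq J J') by lia.
    destruct (Nat.eq_dec J (J' - 9)) as [e|ne].
    + rewrite <- e. rewrite delta_refl. pose proof (sqrt_pos' _ (h5 J a)). pose proof (h5 J a). field. lra.
    + rewrite delta_neq by auto. ring.
  -
    rewrite (sumn_zero 9). rewrite (sumn_ext 12 _ (fun m => TiQ P Ti J m / (2 * mu J) * delta m (J' - 12)%nat)).
    + rewrite sumn_delta_r by lia. replace (J' - 12)%nat with (6 + (J' - 18))%nat by lia.
      rewrite (TiQ_K P T Ti mu) by (auto; lia). rewrite delta_neq by lia. field. pose proof (h5 J a); lra.
    + intros m hm. unfold T21, Ti21; rw_ltb. nsimpl. rewrite (delta_shift 9 (9 + m) (J' - 3)) by lia. nsimpl.
      replace (J' - 3 - 9)%nat with (J' - 12)%nat by lia. auto.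
    + intros i hi. unfold T21; rw_ltb. rewrite (delta_neq i) by lia. ring.
  -
    rewrite (sumn_ext 9 _ (fun i => Ti (J - 9)%nat i * T i J' * - (sqrt (mu J') / (2 * sqrt (mu (J - 9)%nat))))).
    2: { intros i hi. unfold T21, Ti21; rw_ltb. pose proof (sqrt_pos' _ (h5 (J - 9)%nat ltac:(lia))). field. lra. }
    rewrite (sumn_ext 12 _ (fun m => TiQ P Ti (J - 9)%nat m * RT P T m J' * / (2 * mu (J - 9)%nat))).
    2: { intros m hm. unfold T21, Ti21; rw_ltb. nsimpl. pose proof (h5 (J - 9)%nat ltac:(lia)). field. lra. }
    rewrite !sumn_scal_r. rewrite (L6 P T Ti mu) by (auto; lia). fold (mmul 9 Ti T (J - 9)%nat J'). rewrite h4 by lia.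
    rewrite (delta_neq J J') by lia.
    destruct (Nat.eq_dec (J - 9) J') as [e|ne].
    + rewrite e. rewrite delta_refl. pose proof (sqrt_pos' _ (h5 J' b)). pose proof (h5 J' b). field. lra.
    + rewrite delta_neq by auto. ring.
  -
    rewrite (sumn_ext 9 _ (fun i => Ti (J - 9)%nat i * T i (J' - 9)%nat * (sqrt (mu (J' - 9)%nat) / (2 * sqrt (mu (J - 9)%nat))))).
    2: { intros i hi. unfold T21, Ti21; rw_ltb. pose proof (sqrt_pos' _ (h5 (J - 9)%nat ltac:(lia))). field. lra. }
    rewrite (sumn_ext 12 _ (fun m => TiQ P Ti (J - 9)%nat m * RT P T m (J' - 9)%nat * / (2 * mu (J - 9)%nat))).
    2: { intros m hm. unfold T21, Ti21; rw_ltb. nsimpl. pose proof (h5 (J - 9)%nat ltac:(lia)). field. lra. }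
    rewrite !sumn_scal_r. rewrite (L6 P T Ti mu) by (auto; lia). fold (mmul 9 Ti T (J - 9)%nat (J' - 9)%nat). rewrite h4 by lia.
    rewrite (delta_shift 9 J J') by lia.
    destruct (Nat.eq_dec (J - 9) (J' - 9)) as [e|ne].
    + rewrite e. rewrite delta_refl. pose proof (sqrt_pos' _ (h5 (J' - 9)%nat ltac:(lia))). pose proof (h5 (J' - 9)%nat ltac:(lia)). field. lra.
    + rewrite delta_neq by auto. ring.
  -
    rewrite (sumn_zero 9). rewrite (sumn_ext 12 _ (fun m => TiQ P Ti (J - 9)%nat m / (2 * mu (J - 9)%nat) * delta m (J' - 12)%nat)).
    + rewrite sumn_delta_r by lia. replace (J' - 12)%nat with (6 + (J' - 18))%nat by lia.
      rewrite (TiQ_K P T Ti mu) by (auto; lia). rewrite delta_neq by lia. field. pose proof (h5 (J - 9)%nat ltac:(lia)); lra.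
    + intros m hm. unfold T21, Ti21; rw_ltb. nsimpl. rewrite (delta_shift 9 (9 + m) (J' - 3)) by lia. nsimpl.
      replace (J' - 3 - 9)%nat with (J' - 12)%nat by lia. auto.
    + intros i hi. unfold T21; rw_ltb. rewrite (delta_neq i) by lia. ring.
  -
    rewrite (sumn_zero 9) by (intros i hi; unfold Ti21; rw_ltb; ring).
    rewrite (sumn_ext 12 _ (fun m => PiW P T Ti mu (J - 12)%nat m * RT P T m J')).
    2: { intros m hm. unfold T21, Ti21; rw_ltb. nsimpl. auto. }
    unfold PiW. rewrite (sumn_ext 12 _ (fun m => delta (J - 12)%nat m * RT P T m J' - RGQ P T Ti mu (J - 12)%nat m * RT P T m J'))
      by (intros; ring).
    rewrite sumn_minus, (sumn_delta_l 12 (fun m => RT P T m J')) by lia. rewrite (L7 P T Ti mu) by auto.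
    rewrite delta_neq by lia. ring.
  -
    rewrite (sumn_zero 9) by (intros i hi; unfold Ti21; rw_ltb; ring).
    rewrite (sumn_ext 12 _ (fun m => PiW P T Ti mu (J - 12)%nat m * RT P T m (J' - 9)%nat)).
    2: { intros m hm. unfold T21, Ti21; rw_ltb. nsimpl. auto. }
    unfold PiW. rewrite (sumn_ext 12 _ (fun m => delta (J - 12)%nat m * RT P T m (J' - 9)%nat - RGQ P T Ti mu (J - 12)%nat m * RT P T m (J' - 9)%nat))
      by (intros; ring).
    rewrite sumn_minus, (sumn_delta_l 12 (fun m => RT P T m (J' - 9)%nat)) by lia. rewrite (L7 P T Ti mu) by (auto; lia).
    rewrite delta_neq by lia. ring.
  -
    rewrite (sumn_zero 9) by (intros i hi; unfold Ti21; rw_ltb; ring).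
    rewrite (sumn_ext 12 _ (fun m => PiW P T Ti mu (J - 12)%nat m * delta m (J' - 12)%nat)).
    2: { intros m hm. unfold T21, Ti21; rw_ltb. nsimpl. rewrite (delta_shift 9 (9 + m) (J' - 3)) by lia. nsimpl.
         replace (J' - 3 - 9)%nat with (J' - 12)%nat by lia. auto. }
    rewrite sumn_delta_r by lia. unfold PiW. replace (J' - 12)%nat with (6 + (J' - 18))%nat by lia.
    rewrite (RGQ_K P T Ti mu) by (auto; lia). rewrite (delta_shift 12 J J') by lia.
    replace (6 + (J' - 18))%nat with (J' - 12)%nat by lia. ring.
Qed.

Lemma build21 P T Ti mu : bhyps P T Ti mu ->
  diagonalizable_with 21 P (fun x => x = 0 \/ exists j, (j < 9)%nat /\ (x = sqrt (mu j) \/ x = - sqrt (mu j))).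
Proof.
  intros H. exists (T21 P T mu), (Ti21 P T Ti mu), (mu21 mu). split; [|split; [|split]].
  - intros; apply (bl_TTi P T Ti mu); auto.
  - intros; apply (bl_TiT P T Ti mu); auto.
  - intros j hj. unfold mu21. destruct (Nat.ltb_spec j 9).
    + right; exists j; auto.
    + destruct (Nat.ltb_spec j 18). right; exists (j - 9)%nat; split; [lia|auto]. left; auto.
  - intros; apply (bl_PT P T Ti mu); auto.
Qed.

Lemma Mmat_P2 c1 c2 c3 c4 k i j : hyps c1 c2 c3 c4 -> (i < 9)%nat -> (j < 9)%nat ->
  Mmat c1 c2 c3 c4 k i j = mmul 21 (Pmat c1 c2 c3 c4 k) (Pmat c1 c2 c3 c4 k) i j.
Proof.
  intros H hi hj. unfold mmul.
  rewrite (sumn_ext 21 _ (fun L => PmapE c1 c2 c3 c4 k (unitv L) i * PmapE c1 c2 c3 c4 k (unitv j) L))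
    by (intros; unfold Pmat; rewrite !Pmap_eq; auto).
  rewrite <- PmapE_lin by lia. unfold Mmat. rewrite Mmap_eq by (auto; try apply mod3_lt; apply div3_lt; auto).
  unfold PmapE at 1. rewrite (proj2 (Nat.ltb_lt i 9)) by auto. unfold MmapE.
  apply QmapE_ext; try apply div3_lt; try apply mod3_lt; auto.
  - intros a b ha hb. unfold Nof, PmapE. lt3 a; lt3 b; simpl; auto.
  - intros b hb. unfold aof, PmapE. lt3 b; simpl; auto.
Qed.

Lemma QmapE_zero c1 c2 c3 c4 k N av a b : eq3 N (fun _ _ => 0) -> (forall b, (b < 3)%nat -> av b = 0) ->
  (a < 3)%nat -> (b < 3)%nat -> QmapE c1 c2 c3 c4 k N av a b = 0.
Proof.
  intros HN Ha ha hb. rewrite (QmapE_ext c1 c2 c3 c4 k N (fun _ _ => 0) av (fun _ => 0)) by auto.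
  unfold QmapE, LinvE, QX, tr3, sum3. unfold Rdiv. ring.
Qed.

Lemma P0_h1 c1 c2 c3 c4 i j : hyps c1 c2 c3 c4 -> (i < 9)%nat -> (j < 9)%nat -> Pmat c1 c2 c3 c4 e3 i j = 0.
Proof.
  intros H hi hj. unfold Pmat. rewrite Pmap_eq by auto. unfold PmapE. rw_ltb.
  apply QmapE_zero; try apply div3_lt; try apply mod3_lt; auto.
  - intros a b ha hb. unfold Nof, unitv. destruct (Nat.eqb_spec (9 + 3 * a + b) j); auto; lia.
  - intros b hb. unfold aof, unitv. destruct (Nat.eqb_spec (18 + b) j); auto; lia.
Qed.

Lemma P0_h2 c1 c2 c3 c4 i j : hyps c1 c2 c3 c4 -> (9 <= i < 21)%nat -> (9 <= j < 21)%nat ->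
  Pmat c1 c2 c3 c4 e3 i j = 0.
Proof.
  intros H hi hj. unfold Pmat. rewrite Pmap_eq by auto. unfold PmapE. rw_ltb.
  assert (HK : eq3 (Kof (unitv j)) (fun _ _ => 0)).
  { intros a b ha hb. unfold Kof, unitv. destruct (Nat.eqb_spec (3 * a + b) j); auto; lia. }
  destruct (Nat.ltb_spec i 18).
  - rewrite (RmapN_ext c1 c2 c3 c4 e3 _ _ _ _ HK) by apply mod3_lt. unfold RmapN, symp, tr3, sum3, Rdiv; ring.
  - rewrite (Rmapa_ext c1 c2 c3 c4 e3 _ _ _ HK) by lia. unfold Rmapa, tr3, sum3, Rdiv; ring.
Qed.

Lemma P0_h7 c1 c2 c3 c4 i m : hyps c1 c2 c3 c4 -> (i < 9)%nat -> (m < 3)%nat ->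
  Pmat c1 c2 c3 c4 e3 i (15 + m)%nat = 0.
Proof.
  intros H hi hm. unfold Pmat. rewrite Pmap_eq by auto. unfold PmapE. rw_ltb.
  d9 i; lt3 m; unfold QmapE, LinvE, QX, Nof, aof, unitv, e3, kvec, tr3, delta; unfold sum3; simpl; unfold Rdiv; ring.
Qed.

Lemma Lmap_zero c1 c2 c3 K a b : eq3 K (fun _ _ => 0) -> (a < 3)%nat -> (b < 3)%nat -> Lmap c1 c2 c3 K a b = 0.
Proof.
  intros HK ha hb. unfold Lmap, symp, tr3, sum3. rewrite !HK by lia. unfold Rdiv; ring.
Qed.

Lemma P0_h8 c1 c2 c3 c4 (w : nat -> R) : hyps c1 c2 c3 c4 -> c1 + c4 <> 2 ->
  (forall i, (i < 9)%nat -> sumn 12 (fun m => Qb (Pmat c1 c2 c3 c4 e3) i m * w m) = 0) ->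
  forall m, (m < 6 \/ 9 <= m < 12)%nat -> w m = 0.
Proof.
  intros H h2 Hw. pose proof H as (h1 & h1' & h3).
  set (w' := fun L => if (L <? 9)%nat then 0 else w (L - 9)%nat).
  assert (HQ : forall i, (i < 9)%nat -> PmapE c1 c2 c3 c4 e3 w' i = 0).
  { intros i hi. rewrite PmapE_lin by lia. rewrite sum21_W, (sumn_zero 9).
    - rewrite Rplus_0_l. rewrite <- (Hw i hi). apply sumn_ext; intros m hm. unfold Qb, w'. rw_ltb. nsimpl.
      unfold Pmat. rewrite Pmap_eq by auto. auto.
    - intros l hl. unfold w'; rw_ltb; ring. }
  assert (HX : forall a b, (a < 3)%nat -> (b < 3)%nat -> QX c1 c4 e3 (Nof w') (aof w') a b = 0).
  { intros a b ha hb. rewrite <- (Lmap_LinvE c1 c2 c3 (QX c1 c4 e3 (Nof w') (aof w')) a b) by auto.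
    apply Lmap_zero; auto. intros x y hx hy. specialize (HQ (3 * x + y)%nat ltac:(lia)).
    unfold PmapE in HQ. rw_ltb. lt3 x; lt3 y; simpl in HQ; exact HQ. }
  assert (E : forall a b, (a < 3)%nat -> (b < 3)%nat -> QX c1 c4 e3 (Nof w') (aof w') a b =
     match a with 0%nat => - w (3 + b)%nat | 1%nat => w b | _ => 0 end + (if Nat.eqb a 2 then w (9 + b)%nat else 0)
     - / 2 * (c1 + c4) * delta a b * w 11%nat).
  { intros a b ha hb. lt3 a; lt3 b; unfold QX, Nof, aof, w', e3, kvec, delta; unfold sum3; simpl; ring. }
  assert (Ha0 : w 9%nat = 0). { pose proof (HX 2%nat 0%nat ltac:(lia) ltac:(lia)). rewrite E in H0 by lia. simpl in H0. unfold delta in H0; simpl in H0. ring_simplify in H0. lra. }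
  assert (Ha1 : w 10%nat = 0). { pose proof (HX 2%nat 1%nat ltac:(lia) ltac:(lia)). rewrite E in H0 by lia. simpl in H0. unfold delta in H0; simpl in H0. ring_simplify in H0. lra. }
  assert (Ha2 : w 11%nat = 0).
  { pose proof (HX 2%nat 2%nat ltac:(lia) ltac:(lia)). rewrite E in H0 by lia. simpl in H0. unfold delta in H0; simpl in H0.
    assert (Hx : w 11%nat * (1 - / 2 * (c1 + c4)) = 0) by lra.
    apply Rmult_integral in Hx. destruct Hx as [Hx|Hx]; auto. exfalso; apply h2; lra. }
  intros m hm.
  assert (Hm : (m < 12)%nat) by lia.
  destruct m as [|[|[|[|[|[|[|[|[|[|[|[|m]]]]]]]]]]]]; try (exfalso; lia); auto.
  - pose proof (HX 1%nat 0%nat ltac:(lia) ltac:(lia)) as HH. rewrite E in HH by lia. unfold delta in HH; simpl in HH. rewrite Ha2 in HH. ring_simplify in HH. lra.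
  - pose proof (HX 1%nat 1%nat ltac:(lia) ltac:(lia)) as HH. rewrite E in HH by lia. unfold delta in HH; simpl in HH. rewrite Ha2 in HH. ring_simplify in HH. lra.
  - pose proof (HX 1%nat 2%nat ltac:(lia) ltac:(lia)) as HH. rewrite E in HH by lia. unfold delta in HH; simpl in HH. rewrite Ha2 in HH. ring_simplify in HH. lra.
  - pose proof (HX 0%nat 0%nat ltac:(lia) ltac:(lia)) as HH. rewrite E in HH by lia. unfold delta in HH; simpl in HH. rewrite Ha2 in HH. ring_simplify in HH. lra.
  - pose proof (HX 0%nat 1%nat ltac:(lia) ltac:(lia)) as HH. rewrite E in HH by lia. unfold delta in HH; simpl in HH. rewrite Ha2 in HH. ring_simplify in HH. lra.
  - pose proof (HX 0%nat 2%nat ltac:(lia) ltac:(lia)) as HH. rewrite E in HH by lia. unfold delta in HH; simpl in HH. rewrite Ha2 in HH. ring_simplify in HH. lra.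
Qed.

Lemma diag_weaken n A (P P' : R -> Prop) : (forall x, P x -> P' x) ->
  diagonalizable_with n A P -> diagonalizable_with n A P'.
Proof.
  intros HP (T & Ti & mu & h1 & h2 & h3 & h4). exists T, Ti, mu. repeat split; auto.
Qed.

Definition Pset c1 c2 c3 c4 (mu : R) : Prop :=
  mu = 0 \/ mu = 1 \/ mu = -1
  \/ mu = sqrt (lamT2 c1 c3) \/ mu = - sqrt (lamT2 c1 c3)
  \/ mu = sqrt (lamV2 c1 c3 c4) \/ mu = - sqrt (lamV2 c1 c3 c4)
  \/ mu = sqrt (lamS2 c1 c2 c3 c4) \/ mu = - sqrt (lamS2 c1 c2 c3 c4).

Lemma c14_ne2 c1 c2 c3 c4 : 0 < lamS2 c1 c2 c3 c4 -> c1 + c4 <> 2.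
Proof.
  intros hS E. unfold lamS2 in hS. rewrite E in hS. replace (2 - 2) with 0 in hS by ring.
  rewrite Rmult_0_r in hS. unfold Rdiv in hS. rewrite Rmult_0_l in hS. lra.
Qed.

Lemma P0_diag c1 c2 c3 c4 : hyps c1 c2 c3 c4 ->
  0 < lamT2 c1 c3 -> 0 < lamV2 c1 c3 c4 -> 0 < lamS2 c1 c2 c3 c4 ->
  lamV2 c1 c3 c4 <> 1 -> lamS2 c1 c2 c3 c4 <> 1 ->
  diagonalizable_with 21 (Pmat c1 c2 c3 c4 e3) (Pset c1 c2 c3 c4).
Proof.
  intros H hT hV hS hV1 hS1.
  destruct (M0_diag c1 c2 c3 c4 H hV1 hS1) as (T & Ti & mu & d1 & d2 & d3 & d4).
  assert (hmu : forall j, (j < 9)%nat -> 0 < mu j).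
  { intros j hj. destruct (d3 j hj) as [e|[e|[e|e]]]; rewrite e; auto; lra. }
  eapply diag_weaken; [|apply (build21 (Pmat c1 c2 c3 c4 e3) T Ti mu)].
  - intros x [->|(j & hj & hx)]. left; auto.
    destruct (d3 j hj) as [e|[e|[e|e]]]; rewrite e in hx; destruct hx as [->| ->]; unfold Pset.
    + rewrite sqrt_1. tauto.
    + rewrite sqrt_1. tauto.
    + tauto.
    + tauto.
    + tauto.
    + tauto.
    + tauto.
    + tauto.
  - split; [|split; [|split; [|split; [|split; [|split; [|split]]]]]].
    + intros; apply P0_h1; auto.
    + intros; apply P0_h2; auto.
    + auto.
    + auto.
    + auto.
    + intros i j hi hj. rewrite <- d4 by auto. apply mmul_ext_l. intros l hl.
      rewrite Mmat_P2 by auto. unfold mmul, Mb, Qb, Rb. rewrite sum21_W, (sumn_zero 9). rewrite Rplus_0_l; reflexivity.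
      intros L hL. rewrite P0_h1 by auto. ring.
    + intros; apply P0_h7; auto.
    + intros w Hw. apply (P0_h8 c1 c2 c3 c4 w H (c14_ne2 _ _ _ _ hS) Hw).
Qed.

Definition msub (A : mat) (c : R) : mat := fun i j => A i j - c * delta i j.
Fixpoint prodM (n : nat) (A : mat) (L : list R) : mat :=
  match L with nil => fun i j => delta i j | c :: L' => mmul n (msub A c) (prodM n A L') end.
Fixpoint pl (L : list R) (x : R) : R := match L with nil => 1 | c :: L' => (x - c) * pl L' x end.
Fixpoint cf (L : list R) (m : R) : R := match L with nil => 1 | c :: L' => / (m - c) * cf L' m end.
Definition Proj n A (S : list R) m : mat := fun i j =>
  cf (remove Req_EM_T m S) m * prodM n A (remove Req_EM_T m S) i j.
Fixpoint lsum (L : list R) (f : R -> R) : R := match L with nil => 0 | m :: L' => f m + lsum L' f end.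
Definition Hm n A S : mat := fun i j => lsum S (fun m => mmul n (transp (Proj n A S m)) (Proj n A S m) i j).

Definition dd n (A T Ti : mat) (d : nat -> R) : Prop :=
  (forall i j, (i < n)%nat -> (j < n)%nat -> mmul n T Ti i j = delta i j) /\
  (forall i j, (i < n)%nat -> (j < n)%nat -> mmul n Ti T i j = delta i j) /\
  (forall i j, (i < n)%nat -> (j < n)%nat -> mmul n A T i j = T i j * d j).

Lemma prodM_diag n A T Ti d L i j : dd n A T Ti d -> (i < n)%nat -> (j < n)%nat ->
  prodM n A L i j = sumn n (fun q => T i q * pl L (d q) * Ti q j).
Proof.
  intros (h1 & h2 & h3). revert i j. induction L as [|c L IH]; intros i j hi hj; simpl.
  - rewrite <- h1 by auto. unfold mmul. apply sumn_ext; intros; ring.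
  - unfold mmul at 1. rewrite (sumn_ext n _ (fun l => msub A c i l * sumn n (fun q => T l q * pl L (d q) * Ti q j)))
      by (intros; rewrite IH; auto).
    rewrite (sumn_ext n _ (fun l => sumn n (fun q => msub A c i l * T l q * (pl L (d q) * Ti q j))))
      by (intros; rewrite <- sumn_scal_l; apply sumn_ext; intros; ring).
    rewrite sumn_swap. apply sumn_ext; intros q hq. rewrite sumn_scal_r.
    transitivity ((mmul n A T i q - c * T i q) * (pl L (d q) * Ti q j)).
    + f_equal. unfold mmul, msub.
      rewrite (sumn_ext n _ (fun l => A i l * T l q - c * (delta i l * T l q))) by (intros; ring).
      rewrite sumn_minus, sumn_scal_l, (sumn_delta_l n (fun l => T l q)) by auto. auto.
    + rewrite h3 by auto. ring.
Qed.

Lemma pl_in L x : In x L -> pl L x = 0.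
Proof.
  induction L as [|c L IH]; simpl; intros H; [contradiction|].
  destruct H as [->|H]. ring. rewrite IH; auto; ring.
Qed.
Lemma cf_pl L m : ~ In m L -> cf L m * pl L m = 1.
Proof.
  induction L as [|c L IH]; simpl; intros H; [ring|].
  assert (m - c <> 0) by (intro E; apply H; left; lra).
  replace (/ (m - c) * cf L m * ((m - c) * pl L m)) with ((/ (m - c) * (m - c)) * (cf L m * pl L m)) by ring.
  rewrite Rinv_l, IH by auto. ring.
Qed.

Definition ind (x m : R) : R := if Req_EM_T x m then 1 else 0.

Lemma cf_pl_ind S m x : In m S -> In x S -> cf (remove Req_EM_T m S) m * pl (remove Req_EM_T m S) x = ind x m.
Proof.
  intros hm hx. unfold ind. destruct (Req_EM_T x m) as [->|ne].
  - apply cf_pl. apply remove_In.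
  - rewrite pl_in. ring. apply in_in_remove; auto.
Qed.

Lemma Proj_eq n A T Ti d S m i j : dd n A T Ti d -> (forall q, (q < n)%nat -> In (d q) S) -> In m S ->
  (i < n)%nat -> (j < n)%nat ->
  Proj n A S m i j = sumn n (fun q => T i q * ind (d q) m * Ti q j).
Proof.
  intros H HS hm hi hj. unfold Proj. rewrite (prodM_diag n A T Ti d) by auto.
  rewrite <- sumn_scal_l. apply sumn_ext; intros q hq. rewrite <- (cf_pl_ind S m (d q)) by auto. ring.
Qed.

Lemma lsum_ext L f g : (forall m, In m L -> f m = g m) -> lsum L f = lsum L g.
Proof. induction L; simpl; intros H; auto. rewrite H, IHL; auto. Qed.
Lemma lsum_sumn L n F : lsum L (fun m => sumn n (fun q => F m q)) = sumn n (fun q => lsum L (fun m => F m q)).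
Proof.
  induction L as [|a L IH]; simpl. symmetry; apply sumn_zero; auto.
  rewrite IH, <- sumn_plus. auto.
Qed.
Lemma lsum_scal_l L c f : lsum L (fun m => c * f m) = c * lsum L f.
Proof. induction L; simpl; [ring|]. rewrite IHL; ring. Qed.
Lemma lsum_scal_r L c f : lsum L (fun m => f m * c) = lsum L f * c.
Proof. induction L; simpl; [ring|]. rewrite IHL; ring. Qed.

Lemma lsum_ind0 S x : ~ In x S -> lsum S (fun m => ind x m) = 0.
Proof.
  induction S as [|a S IH]; simpl; intros H; auto. unfold ind at 1.
  destruct (Req_EM_T x a). exfalso; apply H; left; auto. rewrite IH; auto. ring.
Qed.
Lemma lsum_ind S x : NoDup S -> In x S -> lsum S (fun m => ind x m) = 1.
Proof.
  induction S as [|a S IH]; simpl; intros hN hx; [contradiction|].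
  inversion hN; subst. unfold ind at 1. destruct (Req_EM_T x a) as [->|ne].
  - rewrite lsum_ind0; auto; ring.
  - destruct hx as [->|hx]. contradiction. rewrite IH; auto; ring.
Qed.

Lemma Proj_sum n A T Ti d S i j : dd n A T Ti d -> (forall q, (q < n)%nat -> In (d q) S) -> NoDup S ->
  (i < n)%nat -> (j < n)%nat ->
  lsum S (fun m => Proj n A S m i j) = delta i j.
Proof.
  intros H HS hN hi hj. pose proof H as (h1 & h2 & h3).
  rewrite (lsum_ext S _ (fun m => sumn n (fun q => T i q * ind (d q) m * Ti q j)))
    by (intros; apply (Proj_eq n A T Ti d); auto).
  rewrite lsum_sumn. rewrite <- h1 by auto. unfold mmul. apply sumn_ext; intros q hq.
  rewrite (lsum_ext S _ (fun m => T i q * Ti q j * ind (d q) m)) by (intros; ring).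
  rewrite lsum_scal_l, lsum_ind; auto. ring.
Qed.

Lemma Adecomp n A T Ti d l j : dd n A T Ti d -> (l < n)%nat -> (j < n)%nat ->
  A l j = sumn n (fun r => T l r * (d r * Ti r j)).
Proof.
  intros H hl hj. pose proof H as (h1 & h2 & h3).
  transitivity (sumn n (fun p => A l p * sumn n (fun r => T p r * Ti r j))).
  { rewrite (sumn_ext n _ (fun p => A l p * delta p j)). rewrite sumn_delta_r; auto.
    intros p hp. fold (mmul n T Ti p j). rewrite h1; auto. }
  rewrite sum_assoc. apply sumn_ext; intros r hr. fold (mmul n A T l r). rewrite h3 by auto. ring.
Qed.

Lemma TiA n A T Ti d q j : dd n A T Ti d -> (q < n)%nat -> (j < n)%nat ->
  mmul n Ti A q j = d q * Ti q j.
Proof.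
  intros H hq hj. pose proof H as (h1 & h2 & h3). unfold mmul.
  rewrite (sumn_ext n _ (fun l => Ti q l * sumn n (fun r => T l r * (d r * Ti r j))))
    by (intros; rewrite (Adecomp n A T Ti d) by auto; auto).
  rewrite sum_assoc. rewrite (sumn_ext n _ (fun r => (d r * Ti r j) * delta r q)).
  - rewrite (sumn_delta_r n (fun r => d r * Ti r j)); auto.
  - intros r hr. fold (mmul n Ti T q r). rewrite h2 by auto. rewrite delta_sym. ring.
Qed.

Lemma Proj_A n A T Ti d S m i j : dd n A T Ti d -> (forall q, (q < n)%nat -> In (d q) S) -> In m S ->
  (i < n)%nat -> (j < n)%nat -> mmul n (Proj n A S m) A i j = m * Proj n A S m i j.
Proof.
  intros H HS hm hi hj.
  rewrite (mmul_ext_l n _ (fun i q => sumn n (fun p => T i p * ind (d p) m * Ti p q)))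
    by (intros; apply (Proj_eq n A T Ti d); auto).
  rewrite (Proj_eq n A T Ti d) by auto. unfold mmul.
  transitivity (sumn n (fun p => T i p * ind (d p) m * mmul n Ti A p j)).
  { rewrite (sumn_ext n _ (fun l => sumn n (fun p => T i p * ind (d p) m * (Ti p l * A l j))))
      by (intros; rewrite <- sumn_scal_r; apply sumn_ext; intros; ring).
    rewrite sumn_swap. apply sumn_ext; intros p hp. unfold mmul. rewrite <- sumn_scal_l. auto. }
  rewrite <- sumn_scal_l. apply sumn_ext; intros p hp. rewrite (TiA n A T Ti d) by auto.
  unfold ind. destruct (Req_EM_T (d p) m) as [->|ne]; ring.
Qed.

Lemma mmul_lsum_l n L (F : R -> mat) B i j :
  mmul n (fun a b => lsum L (fun m => F m a b)) B i j = lsum L (fun m => mmul n (F m) B i j).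
Proof.
  unfold mmul. rewrite (sumn_ext n _ (fun l => lsum L (fun m => F m i l * B l j))).
  - rewrite <- lsum_sumn. auto.
  - intros l hl. rewrite lsum_scal_r. auto.
Qed.
Lemma mmul_lsum_r n L (F : R -> mat) B i j :
  mmul n B (fun a b => lsum L (fun m => F m a b)) i j = lsum L (fun m => mmul n B (F m) i j).
Proof.
  unfold mmul. rewrite (sumn_ext n _ (fun l => lsum L (fun m => B i l * F m l j))).
  - rewrite <- lsum_sumn. auto.
  - intros l hl. rewrite lsum_scal_l. auto.
Qed.

Lemma H_PT n A T Ti d S i j : dd n A T Ti d -> (forall q, (q < n)%nat -> In (d q) S) ->
  (i < n)%nat -> (j < n)%nat ->
  mmul n (Hm n A S) A i j = mmul n (transp A) (Hm n A S) i j.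
Proof.
  intros H HS hi hj. unfold Hm. rewrite mmul_lsum_l, mmul_lsum_r. apply lsum_ext; intros m hm.
  rewrite (mmul_assoc n (transp (Proj n A S m)) (Proj n A S m) A).
  rewrite <- (mmul_assoc n (transp A) (transp (Proj n A S m)) (Proj n A S m)).
  rewrite (mmul_ext_r n (transp (Proj n A S m)) (mmul n (Proj n A S m) A) (fun a b => m * Proj n A S m a b))
    by (intros; apply (Proj_A n A T Ti d); auto).
  rewrite (mmul_ext_l n (mmul n (transp A) (transp (Proj n A S m))) (fun a b => m * transp (Proj n A S m) a b)).
  - unfold mmul. apply sumn_ext; intros; ring.
  - intros l hl. unfold transp. unfold mmul at 1.
    rewrite <- (Proj_A n A T Ti d S m l i) by auto. unfold mmul. apply sumn_ext; intros; ring.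
Qed.

Lemma H_sym n A S i j : Hm n A S i j = Hm n A S j i.
Proof. unfold Hm. apply lsum_ext; intros. unfold mmul, transp. apply sumn_ext; intros; ring. Qed.

Lemma quad_form n (X : mat) (v : vec) :
  sumn n (fun i => v i * sumn n (fun j => mmul n (transp X) X i j * v j))
  = sumn n (fun l => sumn n (fun i => X l i * v i) * sumn n (fun i => X l i * v i)).
Proof.
  unfold mmul, transp.
  rewrite (sumn_ext n _ (fun i => sumn n (fun l => v i * X l i * sumn n (fun j => X l j * v j)))).
  - rewrite sumn_swap. apply sumn_ext; intros l hl. rewrite <- sumn_scal_r. apply sumn_ext; intros; ring.
  - intros i hi. rewrite (sumn_ext n _ (fun j => sumn n (fun l => X l i * X l j * v j)))
      by (intros; rewrite <- sumn_scal_r; auto).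
    rewrite sumn_swap, <- sumn_scal_l. apply sumn_ext; intros l hl. rewrite <- !sumn_scal_l. apply sumn_ext; intros; ring.
Qed.

Lemma lsum_quad n L (G : R -> mat) (v : vec) :
  sumn n (fun i => v i * sumn n (fun j => lsum L (fun m => G m i j) * v j))
  = lsum L (fun m => sumn n (fun i => v i * sumn n (fun j => G m i j * v j))).
Proof.
  induction L as [|a L IH]; simpl.
  - apply sumn_zero; intros. rewrite sumn_zero; [ring|]. intros; ring.
  - rewrite <- IH. rewrite <- sumn_plus. apply sumn_ext; intros.
    rewrite <- Rmult_plus_distr_l, <- sumn_plus. f_equal. apply sumn_ext; intros; ring.
Qed.

Lemma sumn_sq_nonneg n g : 0 <= sumn n (fun l => g l * g l).
Proof. induction n; simpl; nra. Qed.
Lemma sumn_sq_zero n g : sumn n (fun l => g l * g l) <= 0 -> forall l, (l < n)%nat -> g l = 0.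
Proof.
  induction n; intros H l hl; [lia|]. simpl in H. pose proof (sumn_sq_nonneg n g).
  assert (g n * g n = 0) by nra. assert (sumn n (fun l => g l * g l) <= 0) by nra.
  destruct (Nat.eq_dec l n) as [->|ne]. nra. apply IHn; auto; lia.
Qed.
Lemma lsum_nonneg L f : (forall m, In m L -> 0 <= f m) -> 0 <= lsum L f.
Proof. induction L; simpl; intros H; [lra|]. pose proof (H a (or_introl eq_refl)). pose proof (IHL (fun m h => H m (or_intror h))). lra. Qed.
Lemma lsum_zero L f : (forall m, In m L -> 0 <= f m) -> lsum L f <= 0 -> forall m, In m L -> f m <= 0.
Proof.
  induction L; simpl; intros H Hs m hm; [contradiction|].
  pose proof (H a (or_introl eq_refl)). pose proof (lsum_nonneg L f (fun m h => H m (or_intror h))).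
  destruct hm as [->|hm]. lra. apply IHL; auto. lra.
Qed.

Lemma H_posdef n A T Ti d S : dd n A T Ti d -> (forall q, (q < n)%nat -> In (d q) S) -> NoDup S ->
  forall v : vec, (exists i, (i < n)%nat /\ v i <> 0) ->
  0 < sumn n (fun i => v i * sumn n (fun j => Hm n A S i j * v j)).
Proof.
  intros H HS hN v (i0 & hi0 & hv).
  unfold Hm. rewrite lsum_quad.
  rewrite (lsum_ext S _ (fun m => sumn n (fun l => sumn n (fun i => Proj n A S m l i * v i) * sumn n (fun i => Proj n A S m l i * v i))))
    by (intros; apply quad_form).
  destruct (Rlt_or_le 0 (lsum S (fun m => sumn n (fun l => sumn n (fun i => Proj n A S m l i * v i) * sumn n (fun i => Proj n A S m l i * v i))))) as [Hp|Hp]; auto.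
  exfalso. apply hv.
  assert (Z : forall m, In m S -> forall l, (l < n)%nat -> sumn n (fun i => Proj n A S m l i * v i) = 0).
  { intros m hm. apply sumn_sq_zero. apply (lsum_zero S _ (fun m _ => sumn_sq_nonneg _ _) Hp); auto. }
  transitivity (sumn n (fun j => delta i0 j * v j)). { symmetry; apply sumn_delta_l; auto. }
  rewrite (sumn_ext n _ (fun j => lsum S (fun m => Proj n A S m i0 j * v j))).
  - rewrite <- lsum_sumn. transitivity (lsum S (fun _ => 0)).
    + apply lsum_ext; intros; apply Z; auto.
    + clear. induction S; simpl; auto. rewrite IHS; ring.
  - intros j hj. rewrite lsum_scal_r, (Proj_sum n A T Ti d) by auto. auto.
Qed.

Lemma cont_const c : continuous3 (fun _ _ _ => c).
Proof. intros x y z e he. exists 1; split; [lra|]. intros. unfold Rminus; rewrite Rplus_opp_r, Rabs_R0; auto. Qed.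

Lemma cont_px : continuous3 (fun x _ _ => x).
Proof. intros x y z e he. exists e; split; auto. Qed.
Lemma cont_py : continuous3 (fun _ y _ => y).
Proof. intros x y z e he. exists e; split; auto. Qed.
Lemma cont_pz : continuous3 (fun _ _ z => z).
Proof. intros x y z e he. exists e; split; auto. Qed.

Lemma cont_plus f g : continuous3 f -> continuous3 g -> continuous3 (fun x y z => f x y z + g x y z).
Proof.
  intros hf hg x y z e he.
  destruct (hf x y z (e/2) ltac:(lra)) as (d1 & hd1 & H1).
  destruct (hg x y z (e/2) ltac:(lra)) as (d2 & hd2 & H2).
  exists (Rmin d1 d2). split. apply Rmin_pos; auto.
  intros x' y' z' h1 h2 h3.
  pose proof (Rmin_l d1 d2). pose proof (Rmin_r d1 d2).
  specialize (H1 x' y' z' ltac:(lra) ltac:(lra) ltac:(lra)).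
  specialize (H2 x' y' z' ltac:(lra) ltac:(lra) ltac:(lra)).
  replace (f x' y' z' + g x' y' z' - (f x y z + g x y z)) with ((f x' y' z' - f x y z) + (g x' y' z' - g x y z)) by ring.
  eapply Rle_lt_trans. apply Rabs_triang. lra.
Qed.

Lemma cont_mult f g : continuous3 f -> continuous3 g -> continuous3 (fun x y z => f x y z * g x y z).
Proof.
  intros hf hg x y z e he.
  set (A := Rabs (f x y z)). set (B := Rabs (g x y z)).
  assert (hA : 0 <= A) by apply Rabs_pos. assert (hB : 0 <= B) by apply Rabs_pos.
  set (e1 := Rmin 1 (e / (A + B + 1))).
  assert (he1 : 0 < e1). { apply Rmin_pos. lra. apply Rdiv_lt_0_compat; lra. }
  assert (he1' : e1 * (A + B + 1) <= e).
  { assert (e1 <= e / (A + B + 1)) by apply Rmin_r.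
    apply (Rmult_le_compat_r (A + B + 1)) in H; [|lra].
    unfold Rdiv in H. rewrite Rmult_assoc, Rinv_l in H; lra. }
  assert (he1'' : e1 <= 1) by apply Rmin_l.
  destruct (hf x y z e1 he1) as (d1 & hd1 & H1).
  destruct (hg x y z e1 he1) as (d2 & hd2 & H2).
  exists (Rmin d1 d2). split. apply Rmin_pos; auto.
  intros x' y' z' h1 h2 h3.
  pose proof (Rmin_l d1 d2). pose proof (Rmin_r d1 d2).
  specialize (H1 x' y' z' ltac:(lra) ltac:(lra) ltac:(lra)).
  specialize (H2 x' y' z' ltac:(lra) ltac:(lra) ltac:(lra)).
  replace (f x' y' z' * g x' y' z' - f x y z * g x y z)
    with (f x' y' z' * (g x' y' z' - g x y z) + (f x' y' z' - f x y z) * g x y z) by ring.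
  eapply Rle_lt_trans. apply Rabs_triang. rewrite !Rabs_mult.
  assert (Rabs (f x' y' z') <= A + 1).
  { replace (f x' y' z') with ((f x' y' z' - f x y z) + f x y z) by ring.
    eapply Rle_trans. apply Rabs_triang. unfold A; lra. }
  assert (Rabs (f x' y' z') * Rabs (g x' y' z' - g x y z) <= (A + 1) * e1).
  { apply Rmult_le_compat; try apply Rabs_pos; lra. }
  assert (Rabs (f x' y' z' - f x y z) * B <= e1 * B).
  { apply Rmult_le_compat_r; lra. }
  assert (Rabs (f x' y' z' - f x y z) * B < e1 * B \/ B = 0) by (destruct (Req_dec B 0); [right; auto| left; apply Rmult_lt_compat_r; lra]).
  destruct H6 as [H6|H6].
  - unfold B in *. nra.
  - unfold B in *. rewrite H6. assert (Rabs (f x' y' z') * Rabs (g x' y' z' - g x y z) < (A + 1) * e1).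
    { apply Rle_lt_trans with ((A + 1) * Rabs (g x' y' z' - g x y z)).
      apply Rmult_le_compat_r; [apply Rabs_pos|lra]. apply Rmult_lt_compat_l; lra. }
    nra.
Qed.

Lemma Ck3_cont n f : Ck3 n f -> continuous3 f.
Proof. destruct n; simpl; tauto. Qed.

Lemma Ck3_mono n f : Ck3 (S n) f -> Ck3 n f.
Proof.
  revert f. induction n; intros f H.
  - simpl in *; tauto.
  - destruct H as [hc hp]. split; auto. intros i hi. destruct (hp i hi) as (g & hg1 & hg2).
    exists g; split; auto.
Qed.

Lemma Ck3_const n c : Ck3 n (fun _ _ _ => c).
Proof.
  revert c. induction n; intros c. apply cont_const. split. apply cont_const.
  intros i hi. exists (fun _ _ _ => 0). split; auto.
  intros x y z. destruct i as [|[|]]; apply derivable_pt_lim_const.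
Qed.

Lemma Ck3_plus n f g : Ck3 n f -> Ck3 n g -> Ck3 n (fun x y z => f x y z + g x y z).
Proof.
  revert f g; induction n; intros f g hf hg.
  - apply cont_plus; auto.
  - destruct hf as [cf pf]; destruct hg as [cg pg]. split. apply cont_plus; auto.
    intros i hi. destruct (pf i hi) as (f' & hf1 & hf2). destruct (pg i hi) as (g' & hg1 & hg2).
    exists (fun x y z => f' x y z + g' x y z). split; auto.
    intros x y z. specialize (hf1 x y z). specialize (hg1 x y z).
    destruct i as [|[|]]; apply (derivable_pt_lim_plus _ _ _ _ _ hf1 hg1).
Qed.

Lemma Ck3_mult n f g : Ck3 n f -> Ck3 n g -> Ck3 n (fun x y z => f x y z * g x y z).
Proof.
  revert f g; induction n; intros f g hf hg.
  - apply cont_mult; auto.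
  - pose proof (Ck3_mono n f hf) as hf0. pose proof (Ck3_mono n g hg) as hg0.
    destruct hf as [cf pf]; destruct hg as [cg pg]. split. apply cont_mult; auto.
    intros i hi. destruct (pf i hi) as (f' & hf1 & hf2). destruct (pg i hi) as (g' & hg1 & hg2).
    exists (fun x y z => f' x y z * g x y z + f x y z * g' x y z). split.
    + intros x y z. specialize (hf1 x y z). specialize (hg1 x y z).
      destruct i as [|[|]]; apply (derivable_pt_lim_mult _ _ _ _ _ hf1 hg1).
    + apply Ck3_plus; apply IHn; auto.
Qed.

Lemma Ck3_px n : Ck3 n (fun x _ _ => x).
Proof.
  destruct n. apply cont_px. split. apply cont_px.
  intros i hi. destruct i as [|[|[|]]]; [exists (fun _ _ _ => 1)|exists (fun _ _ _ => 0)|exists (fun _ _ _ => 0)|lia];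
  (split; [intros x y z; simpl; first [apply derivable_pt_lim_id | apply derivable_pt_lim_const] | apply Ck3_const]).
Qed.
Lemma Ck3_py n : Ck3 n (fun _ y _ => y).
Proof.
  destruct n. apply cont_py. split. apply cont_py.
  intros i hi. destruct i as [|[|[|]]]; [exists (fun _ _ _ => 0)|exists (fun _ _ _ => 1)|exists (fun _ _ _ => 0)|lia];
  (split; [intros x y z; simpl; first [apply derivable_pt_lim_id | apply derivable_pt_lim_const] | apply Ck3_const]).
Qed.
Lemma Ck3_pz n : Ck3 n (fun _ _ z => z).
Proof.
  destruct n. apply cont_pz. split. apply cont_pz.
  intros i hi. destruct i as [|[|[|]]]; [exists (fun _ _ _ => 0)|exists (fun _ _ _ => 0)|exists (fun _ _ _ => 1)|lia];
  (split; [intros x y z; simpl; first [apply derivable_pt_lim_id | apply derivable_pt_lim_const] | apply Ck3_const]).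
Qed.

Lemma sm_const c : smooth3 (fun _ _ _ => c).
Proof. intros n; apply Ck3_const. Qed.
Lemma sm_plus f g : smooth3 f -> smooth3 g -> smooth3 (fun x y z => f x y z + g x y z).
Proof. intros hf hg n; apply Ck3_plus; auto. Qed.
Lemma sm_mult f g : smooth3 f -> smooth3 g -> smooth3 (fun x y z => f x y z * g x y z).
Proof. intros hf hg n; apply Ck3_mult; auto. Qed.
Lemma sm_px : smooth3 (fun x _ _ => x). Proof. intros n; apply Ck3_px. Qed.
Lemma sm_py : smooth3 (fun _ y _ => y). Proof. intros n; apply Ck3_py. Qed.
Lemma sm_pz : smooth3 (fun _ _ z => z). Proof. intros n; apply Ck3_pz. Qed.
Lemma sm_ext f g : (forall x y z, f x y z = g x y z) -> smooth3 f -> smooth3 g.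
Proof.
  intros E H. replace g with f; auto. apply functional_extensionality; intro x.
  apply functional_extensionality; intro y. apply functional_extensionality; intro z. auto.
Qed.
Lemma sm_sumn n (F : nat -> R -> R -> R -> R) : (forall l, (l < n)%nat -> smooth3 (F l)) ->
  smooth3 (fun x y z => sumn n (fun l => F l x y z)).
Proof.
  induction n; intros H; simpl. apply sm_const.
  apply sm_plus. apply IHn; auto. apply (H n); lia.
Qed.

Lemma PmapE_klin c1 c2 c3 c4 x y z v i : (i < 21)%nat ->
  PmapE c1 c2 c3 c4 (kvec x y z) v i = x * PmapE c1 c2 c3 c4 (kvec 1 0 0) v i
    + y * PmapE c1 c2 c3 c4 (kvec 0 1 0) v i + z * PmapE c1 c2 c3 c4 (kvec 0 0 1) v i.
Proof.
  intros hi.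
  do 21 (destruct i as [|i];
    [unfold PmapE, QmapE, LinvE, QX, RmapN, Rmapa, Nof, aof, Kof, kvec, symp, tr3, delta; unfold sum3; simpl; unfold Rdiv; ring|]).
  lia.
Qed.

Lemma Pmat_smooth c1 c2 c3 c4 i j : hyps c1 c2 c3 c4 -> (i < 21)%nat ->
  smooth3 (fun x y z => Pmat c1 c2 c3 c4 (kvec x y z) i j).
Proof.
  intros H hi.
  apply (sm_ext (fun x y z => x * Pmat c1 c2 c3 c4 (kvec 1 0 0) i j + y * Pmat c1 c2 c3 c4 (kvec 0 1 0) i j
                   + z * Pmat c1 c2 c3 c4 (kvec 0 0 1) i j)).
  - intros x y z. unfold Pmat. rewrite !Pmap_eq by auto. rewrite (PmapE_klin c1 c2 c3 c4 x y z) by auto. auto.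
  - apply sm_plus; [apply sm_plus|]; apply sm_mult; try apply sm_const; auto using sm_px, sm_py, sm_pz.
Qed.

Definition SMat (A : R -> R -> R -> mat) (n : nat) : Prop :=
  forall i j, (i < n)%nat -> (j < n)%nat -> smooth3 (fun x y z => A x y z i j).

Lemma SMat_mmul n A B : SMat A n -> SMat B n -> SMat (fun x y z => mmul n (A x y z) (B x y z)) n.
Proof.
  intros hA hB i j hi hj. unfold mmul. apply (sm_sumn n (fun l x y z => A x y z i l * B x y z l j)).
  intros l hl. apply sm_mult; auto.
Qed.

Lemma SMat_prodM n A L : SMat A n -> SMat (fun x y z => prodM n (A x y z) L) n.
Proof.
  intros hA. induction L as [|c L IH]; simpl.
  - intros i j hi hj. apply sm_const.
  - apply SMat_mmul; auto. intros i j hi hj. unfold msub.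
    apply (sm_ext (fun x y z => A x y z i j + (- c * delta i j))). intros; ring.
    apply sm_plus; auto. apply sm_const.
Qed.

Lemma sm_lsum L (F : R -> R -> R -> R -> R) : (forall m, In m L -> smooth3 (F m)) ->
  smooth3 (fun x y z => lsum L (fun m => F m x y z)).
Proof.
  induction L as [|a L IH]; simpl; intros H. apply sm_const.
  apply sm_plus; auto.
Qed.

Lemma SMat_Hm n A S : SMat A n -> SMat (fun x y z => Hm n (A x y z) S) n.
Proof.
  intros hA i j hi hj. unfold Hm.
  apply (sm_lsum S (fun m x y z => mmul n (transp (Proj n (A x y z) S m)) (Proj n (A x y z) S m) i j)).
  intros m hm.
  assert (hP : SMat (fun x y z => Proj n (A x y z) S m) n).
  { intros a b ha hb. unfold Proj. apply sm_mult. apply sm_const. apply (SMat_prodM n A); auto. }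
  apply (SMat_mmul n (fun x y z => transp (Proj n (A x y z) S m)) (fun x y z => Proj n (A x y z) S m)); auto.
  intros a b ha hb. unfold transp. apply hP; auto.
Qed.

Definition Elist c1 c2 c3 c4 : list R :=
  0 :: 1 :: -1 :: sqrt (lamT2 c1 c3) :: - sqrt (lamT2 c1 c3) :: sqrt (lamV2 c1 c3 c4) :: - sqrt (lamV2 c1 c3 c4)
  :: sqrt (lamS2 c1 c2 c3 c4) :: - sqrt (lamS2 c1 c2 c3 c4) :: nil.
Definition Slist c1 c2 c3 c4 : list R := nodup Req_EM_T (Elist c1 c2 c3 c4).

Lemma Pset_S c1 c2 c3 c4 x : Pset c1 c2 c3 c4 x -> In x (Slist c1 c2 c3 c4).
Proof.
  intros Hx. unfold Slist. apply nodup_In. unfold Elist, Pset in *. simpl.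
  destruct Hx as [e|[e|[e|[e|[e|[e|[e|[e|e]]]]]]]]; subst; tauto.
Qed.

Theorem mainTheorem3 (c1 c2 c3 c4 : R)
  (h13 : c1 + c3 <> 1) (h14 : c1 + c4 <> 0)
  (hL : 2 * (1 + c2) + (c1 + c2 + c3) <> 0)
  (hT : 0 < lamT2 c1 c3) (hV : 0 < lamV2 c1 c3 c4) (hS : 0 < lamS2 c1 c2 c3 c4)
  (hV1 : lamV2 c1 c3 c4 <> 1) (hS1 : lamS2 c1 c2 c3 c4 <> 1) :
  (forall x y z : R, x ^ 2 + y ^ 2 + z ^ 2 = 1 ->
     diagonalizable_with 9 (Mmat c1 c2 c3 c4 (kvec x y z))
       (fun mu => mu = 1 \/ mu = lamT2 c1 c3 \/ mu = lamV2 c1 c3 c4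
                  \/ mu = lamS2 c1 c2 c3 c4))
  /\
  (exists H : R -> R -> R -> mat,
     (forall i j, (i < 21)%nat -> (j < 21)%nat -> smooth3 (fun x y z => H x y z i j)) /\
     (forall x y z : R, x ^ 2 + y ^ 2 + z ^ 2 = 1 ->
        sym_posdef 21 (H x y z) /\
        (forall i j, (i < 21)%nat -> (j < 21)%nat ->
           mmul 21 (H x y z) (Pmat c1 c2 c3 c4 (kvec x y z)) i j
           = mmul 21 (transp (Pmat c1 c2 c3 c4 (kvec x y z))) (H x y z) i j)))
  /\
  (forall x y z : R, x ^ 2 + y ^ 2 + z ^ 2 = 1 ->
     diagonalizable_with 21 (Pmat c1 c2 c3 c4 (kvec x y z))
       (fun mu => mu = 0 \/ mu = 1 \/ mu = -1
                  \/ mu = sqrt (lamT2 c1 c3) \/ mu = - sqrt (lamT2 c1 c3)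
                  \/ mu = sqrt (lamV2 c1 c3 c4) \/ mu = - sqrt (lamV2 c1 c3 c4)
                  \/ mu = sqrt (lamS2 c1 c2 c3 c4) \/ mu = - sqrt (lamS2 c1 c2 c3 c4))).
Proof.
  assert (H : hyps c1 c2 c3 c4) by (split; auto).
  assert (P3 : forall x y z : R, x ^ 2 + y ^ 2 + z ^ 2 = 1 ->
     diagonalizable_with 21 (Pmat c1 c2 c3 c4 (kvec x y z)) (Pset c1 c2 c3 c4)).
  { intros x y z hs. destruct (sphere_frame x y z hs) as [F HF].
    apply (diag_conj 21 _ (Pmat c1 c2 c3 c4 e3) (rho21 F) (transp (rho21 F))).
    - intros; apply Pmat_equiv; auto.
    - intros; apply (rho21_orth1 F (kvec x y z)); auto.
    - intros; apply (rho21_orth2 F (kvec x y z)); auto.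
    - apply P0_diag; auto. }
  split; [|split].
  - intros x y z hs. destruct (sphere_frame x y z hs) as [F HF].
    apply (diag_conj 9 _ (Mmat c1 c2 c3 c4 e3) (rho9 F) (transp (rho9 F))).
    + intros; apply Mmat_equiv; auto.
    + intros; apply (rho9_orth1 F (kvec x y z)); auto.
    + intros; apply (rho9_orth2 F (kvec x y z)); auto.
    + apply M0_diag; auto.
  - exists (fun x y z => Hm 21 (Pmat c1 c2 c3 c4 (kvec x y z)) (Slist c1 c2 c3 c4)). split.
    + apply (SMat_Hm 21 (fun x y z => Pmat c1 c2 c3 c4 (kvec x y z))).
      intros i j hi hj. apply Pmat_smooth; auto.
    + intros x y z hs. destruct (P3 x y z hs) as (T & Ti & mu & d1 & d2 & d3 & d4).
      assert (hdd : dd 21 (Pmat c1 c2 c3 c4 (kvec x y z)) T Ti mu) by (split; auto).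
      assert (hS' : forall q, (q < 21)%nat -> In (mu q) (Slist c1 c2 c3 c4)) by (intros; apply Pset_S; auto).
      split; [split|].
      * intros; apply H_sym.
      * apply (H_posdef 21 _ T Ti mu); auto. apply NoDup_nodup.
      * intros; apply (H_PT 21 _ T Ti mu); auto.
  - exact P3.
Qed.
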